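(* For every $k\in\{2,3,\dots\}\cup\{\infty\}$, the map $\overline s:\overline{\Omega}_k\to\overline s(\overline{\Omega}_k)$, $\overline s(\overline\gamma)=s(\gamma)$, is a homeomorphism from $(\overline{\Omega}_k,\rho_k)$ onto its image, where the image is a subset of $\{0,1,\dots,2k-3\}^{\mathbb{Z}}$ if $k<\infty$ and of $\Theta_\infty$ if $k=\infty$, equipped with the metric $d(x,y)=\sum_{j\in\mathbb{Z}}|x_j-y_j|/2^{|j|}$.
   Context: PSVF conventions: switching manifold $\Sigma=\{y=0\}$; a PSVF $Z=(X,Y)$ uses $X$ on $\{y\ge0\}$, $Y$ on $\{y\le0\}$; trajectories follow the Filippov convention (off $\Sigma$ follow $X$ or $Y$; at crossing points, where the second components of $X$ and $Y$ have the same nonzero sign, pass through; at a regular tangency, i.e. a point of $\Sigma$ where a field is tangent to $\Sigma$ and which is not an invisible tangency of both fields, continue backward and forward along any of the flows of $X$, $Y$ or the sliding field); a global trajectory is a map $\gamma:\mathbb{R}\to\mathbb{R}^2$ which is a bi-infinite orientation-preserving concatenation of such local trajectories on intervals $[t_i,t_{i+1}]$ with $t_i\to\pm\infty$. Finite $k\ge2$: $P_k(x)=-\left(x+\frac{k-1}{2}\right)\left(x-\frac{k-1}{2}\right)\prod_{i=1}^{k-1}\left(x-\left(i-\frac k2\right)\right)^2$, $r_0=\frac{1-k}{2}$, $r_1=\frac{k-1}{2}$, $p_j=j-\frac k2$ ($j=1,\dots,k-1$), $Z_k$: $(1,P_k'(x))$ on $y\ge0$, $(-1,P_k'(x))$ on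 $y\le0$; $\Lambda_k=\{(x,\pm P_k(x)):r_0\le x\le r_1\}$; arcs $I_0=\{(x,\pm P_k(x)):r_0\le x<p_1\}$, $I_{2j-1}=\{(x,P_k(x)):p_j<x<p_{j+1}\}$, $I_{2j}=\{(x,-P_k(x)):p_j<x<p_{j+1}\}$ ($j=1,\dots,k-2$), $I_{2k-3}=\{(x,\pm P_k(x)):p_{k-1}<x\le r_1\}$. Case $k=\infty$: $p_j=j$ ($j\in\mathbb{Z}$), $Z_\infty$: $(1,2\sin(2\pi x))$ on $y\ge0$, $(-1,2\sin(2\pi x))$ on $y\le0$; $P_\infty(x)=\frac{1-\cos(2\pi x)}{\pi}$, $\Lambda_\infty=\{(x,\pm P_\infty(x)):x\in\mathbb{R}\}$; arcs $I_{2j}=\{(x,P_\infty(x)):j<x<j+1\}$, $I_{2j+1}=\{(x,-P_\infty(x)):j<x<j+1\}$; $\Theta_\infty=\{(x_j)_{j\in\mathbb{Z}}:x_j\in\mathbb{Z},|x_{j+1}-x_j|\le2\ \forall j\}$. In both cases: $\Omega_k$ is the set of global trajectories $\gamma$ of $Z_k$ with $\gamma(0)\in\Lambda_k$; the itinerary $s(\gamma)=(s_j(\gamma))_{j\in\mathbb{Z}}$ has $s_j(\gamma)=n$ if $\gamma(j)\in I_n$ and $s_j(\gamma)=m$ if $\gamma(j)=(p_l,0)$ for some $l$ and $\gamma(j+\frac12)\in I_m$; $\gamma_1\sim\gamma_2$ iff $s(\gamma_1)=s(\gamma_2)$, $\overline\Omega_k=\Omega_k/\sim$. Each class has a representative $\gamma^*$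 with $\gamma^*(0)\in\{(p_l,0)\}$; $\rho_k(\overline\gamma_1,\overline\gamma_2)=\sum_{i\in\mathbb{Z}}2^{-|i|}d_H(\gamma_1^*([i,i+1]),\gamma_2^*([i,i+1]))$, $d_H$ the Hausdorff distance, $\gamma_i^*$ such representatives. *)

(* Defs.v *)
From Stdlib Require Import Reals Lra ZArith List ClassicalEpsilon.
From Coquelicot Require Import Coquelicot.

Open Scope R_scope.

Definition pt := (R * R)%type.
Definition vf := pt -> pt.

Definition edist (a b : pt) : R :=
  sqrt ((fst a - fst b) ^ 2 + (snd a - snd b) ^ 2).

Definition follows (F : vf) (g : R -> pt) (t : R) : Prop :=
  is_derive (fun s => fst (g s)) t (fst (F (g t))) /\
  is_derive (fun s => snd (g s)) t (snd (F (g t))).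

(** Filippov sliding vector field (convex combination tangent to y = 0) *)
Definition sliding_field (X Y : vf) (z : pt) : pt :=
  let x2 := snd (X z) in let y2 := snd (Y z) in
  ((y2 * fst (X z) - x2 * fst (Y z)) / (y2 - x2),
   (y2 * snd (X z) - x2 * snd (Y z)) / (y2 - x2)).

Definition local_traj (X Y : vf) (g : R -> pt) (a b : R) : Prop :=
  ((forall t, a <= t <= b -> 0 <= snd (g t)) /\
   (forall t, a < t < b -> follows X g t))
  \/
  ((forall t, a <= t <= b -> snd (g t) <= 0) /\
   (forall t, a < t < b -> follows Y g t))
  \/
  ((forall t, a <= t <= b -> snd (g t) = 0) /\
   (forall t, a < t < b ->
      snd (X (g t)) * snd (Y (g t)) < 0 /\ follows (sliding_field X Y) g t)).

Definition global_traj (X Y : vf) (g : R -> pt) : Prop :=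
  (forall t, continuous (fun s => fst (g s)) t /\ continuous (fun s => snd (g s)) t) /\
  exists tt : Z -> R,
    (forall i, tt i < tt (i + 1)%Z) /\
    (forall M, exists i, M < tt i) /\
    (forall M, exists i, tt i < M) /\
    (forall i, local_traj X Y g (tt i) (tt (i + 1)%Z)).

Definition Omega (X Y : vf) (Lam : pt -> Prop) (g : R -> pt) : Prop :=
  global_traj X Y g /\ Lam (g 0).

(** itinerary relation: arcs I n, tangency abscissae P (the points (p_l,0)) *)
Definition is_itin (I : Z -> pt -> Prop) (P : R -> Prop) (g : R -> pt)
  (s : Z -> Z) : Prop :=
  forall j : Z,
    I (s j) (g (IZR j)) \/
    (exists x, P x /\ g (IZR j) = (x, 0) /\ I (s j) (g (IZR j + / 2))).

Definition itin (I : Z -> pt -> Prop) (P : R -> Prop) (g : R -> pt) : Z -> Z :=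
  epsilon (inhabits (fun _ : Z => 0%Z)) (is_itin I P g).

Definition rep (X Y : vf) (Lam : pt -> Prop) (I : Z -> pt -> Prop) (P : R -> Prop)
  (g : R -> pt) : R -> pt :=
  epsilon (inhabits (fun _ : R => (0, 0)))
    (fun h => Omega X Y Lam h /\ (forall j, itin I P h j = itin I P g j) /\
              exists x, P x /\ h 0 = (x, 0)).

Definition zsum (a : Z -> R) : R :=
  Series (fun n : nat => if Nat.eqb n 0 then a 0%Z
                         else a (Z.of_nat n) + a (- Z.of_nat n)%Z).

Definition pdist (a : pt) (B : pt -> Prop) : R :=
  real (Glb_Rbar (fun r => exists b, B b /\ r = edist a b)).
Definition hdist (A B : pt -> Prop) : R :=
  Rmax (real (Lub_Rbar (fun r => exists a, A a /\ r = pdist a B)))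
       (real (Lub_Rbar (fun r => exists b, B b /\ r = pdist b A))).

Definition seg (g : R -> pt) (i : Z) : pt -> Prop :=
  fun z => exists t, IZR i <= t <= IZR i + 1 /\ z = g t.

(** the metric rho on classes, computed on the representatives *)
Definition rho (X Y : vf) (Lam : pt -> Prop) (I : Z -> pt -> Prop) (P : R -> Prop)
  (g1 g2 : R -> pt) : R :=
  zsum (fun i => (/ 2) ^ (Z.abs_nat i) *
                 hdist (seg (rep X Y Lam I P g1) i) (seg (rep X Y Lam I P g2) i)).

Definition dseq (x y : Z -> Z) : R :=
  zsum (fun j => IZR (Z.abs (x j - y j)) * (/ 2) ^ (Z.abs_nat j)).

(** s-bar : (Omega-bar, rho) -> (s(Omega-bar), d) is a homeomorphism onto its
    image (which lies in target).  s-bar is injective by definition of ~; a class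
    is represented by any of its members g in Omega. *)
Definition itinerary_homeo (X Y : vf) (Lam : pt -> Prop) (I : Z -> pt -> Prop)
  (P : R -> Prop) (target : (Z -> Z) -> Prop) : Prop :=
  (forall g, Omega X Y Lam g -> is_itin I P g (itin I P g) /\ target (itin I P g))
  /\
  (forall g1, Omega X Y Lam g1 -> forall eps, 0 < eps -> exists del, 0 < del /\
     forall g2, Omega X Y Lam g2 -> rho X Y Lam I P g1 g2 < del ->
       dseq (itin I P g1) (itin I P g2) < eps)
  /\
  (forall g1, Omega X Y Lam g1 -> forall eps, 0 < eps -> exists del, 0 < del /\
     forall g2, Omega X Y Lam g2 -> dseq (itin I P g1) (itin I P g2) < del ->
       rho X Y Lam I P g1 g2 < eps).

Definition Pk (k : nat) (x : R) : R :=
  - (x + (INR k - 1) / 2) * (x - (INR k - 1) / 2) *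
  fold_right Rmult 1 (map (fun i => (x - (INR i - INR k / 2)) ^ 2) (seq 1 (k - 1))).

Definition r0k (k : nat) : R := (1 - INR k) / 2.
Definition r1k (k : nat) : R := (INR k - 1) / 2.
Definition pk (k : nat) (j : Z) : R := IZR j - INR k / 2.

Definition Xk (k : nat) : vf := fun z => (1, Derive (Pk k) (fst z)).
Definition Yk (k : nat) : vf := fun z => (-1, Derive (Pk k) (fst z)).

Definition Lamk (k : nat) (z : pt) : Prop :=
  r0k k <= fst z <= r1k k /\ (snd z = Pk k (fst z) \/ snd z = - Pk k (fst z)).

Definition Ik (k : nat) (n : Z) (z : pt) : Prop :=
  let x := fst z in let y := snd z in let K := Z.of_nat k in
  (n = 0%Z /\ r0k k <= x < pk k 1 /\ (y = Pk k x \/ y = - Pk k x))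
  \/ (n = (2 * K - 3)%Z /\ pk k (K - 1) < x <= r1k k /\ (y = Pk k x \/ y = - Pk k x))
  \/ (exists j : Z, (1 <= j <= K - 2)%Z /\ n = (2 * j - 1)%Z /\
        pk k j < x < pk k (j + 1) /\ y = Pk k x)
  \/ (exists j : Z, (1 <= j <= K - 2)%Z /\ n = (2 * j)%Z /\
        pk k j < x < pk k (j + 1) /\ y = - Pk k x).

Definition Psetk (k : nat) (x : R) : Prop :=
  exists l : Z, (1 <= l <= Z.of_nat k - 1)%Z /\ x = pk k l.

Definition targetk (k : nat) (s : Z -> Z) : Prop :=
  forall j, (0 <= s j <= 2 * Z.of_nat k - 3)%Z.

Definition Pinf (x : R) : R := (1 - cos (2 * PI * x)) / PI.
Definition Xinf : vf := fun z => (1, 2 * sin (2 * PI * fst z)).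
Definition Yinf : vf := fun z => (-1, 2 * sin (2 * PI * fst z)).

Definition Laminf (z : pt) : Prop :=
  snd z = Pinf (fst z) \/ snd z = - Pinf (fst z).

Definition Iinf (n : Z) (z : pt) : Prop :=
  let x := fst z in let y := snd z in
  exists j : Z,
    (n = (2 * j)%Z /\ IZR j < x < IZR j + 1 /\ y = Pinf x) \/
    (n = (2 * j + 1)%Z /\ IZR j < x < IZR j + 1 /\ y = - Pinf x).

Definition Psetinf (x : R) : Prop := exists l : Z, x = IZR l.

Definition Thetainf (s : Z -> Z) : Prop :=
  forall j, (Z.abs (s (j + 1) - s j) <= 2)%Z.

(* Main.v *)
Require Import Defs.
From Stdlib Require Import Reals Lra Lia ZArith List ClassicalEpsilon FunctionalExtensionality PropExtensionality.
From Coquelicot Require Import Coquelicot.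
Open Scope R_scope.

Lemma const0 (f : R -> R) a b :
  (forall x, a <= x <= b -> continuous f x) ->
  (forall x, a < x < b -> is_derive f x 0) ->
  forall t, a <= t <= b -> f t = f a.
Proof.
  intros Hc Hd t Ht.
  destruct (Req_dec t a) as [->|Hne]; [reflexivity|].
  destruct (MVT_gen f a t (fun _ => 0)) as [c [Hc1 Hc2]].
  - intros x Hx. rewrite Rmin_left, Rmax_right in Hx by lra. apply Hd; lra.
  - intros x Hx. rewrite Rmin_left, Rmax_right in Hx by lra.
    apply continuity_pt_filterlim. apply Hc; lra.
  - lra.
Qed.

Section Dyn.
Variables (P D : R -> R).
Hypothesis HPD : forall x, is_derive P x (D x).

Definition Xf : vf := fun z => (1, D (fst z)).
Definition Yf : vf := fun z => (-1, D (fst z)).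

Definition gcont (g : R -> pt) :=
  forall t, continuous (fun s => fst (g s)) t /\ continuous (fun s => snd (g s)) t.

Lemma Pcont x : continuous P x.
Proof. apply (@ex_derive_continuous R_AbsRing R_NormedModule P x). eexists. apply HPD. Qed.

Lemma pieceX g a b : gcont g ->
  (forall t, a < t < b -> follows Xf g t) ->
  forall t, a <= t <= b ->
    fst (g t) = fst (g a) + (t - a) /\
    snd (g t) - P (fst (g t)) = snd (g a) - P (fst (g a)).
Proof.
  intros Hc Hf t Ht. split.
  - assert (H := const0 (fun s => fst (g s) - s) a b).
    assert (fst (g t) - t = fst (g a) - a); [|lra].
    apply H; auto.
    + intros x _. apply (continuous_minus (fun s => fst (g s)) (fun s => s)).
      apply Hc. apply continuous_id.
    + intros x Hx. replace 0 with (minus 1 1).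
      2:{ unfold minus, plus, opp; simpl. ring. }
      apply (is_derive_minus (fun s => fst (g s)) (fun s => s)).
      apply (Hf x Hx). apply (@is_derive_id R_AbsRing).
  - apply (const0 (fun s => snd (g s) - P (fst (g s))) a b); auto.
    + intros x _. apply (continuous_minus (fun s => snd (g s)) (fun s => P (fst (g s)))).
      apply Hc. apply continuous_comp. apply Hc. apply Pcont.
    + intros x Hx. destruct (Hf x Hx) as [H1 H2]. simpl in H1, H2.
      replace 0 with (minus (D (fst (g x))) (scal 1 (D (fst (g x))))).
      2:{ unfold minus, plus, opp, scal; simpl. unfold mult; simpl. ring. }
      apply (is_derive_minus (fun s => snd (g s)) (fun s => P (fst (g s)))).
      exact H2.
      apply (is_derive_comp P (fun s => fst (g s))). apply HPD. exact H1.
Qed.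

Lemma pieceY g a b : gcont g ->
  (forall t, a < t < b -> follows Yf g t) ->
  forall t, a <= t <= b ->
    fst (g t) = fst (g a) - (t - a) /\
    snd (g t) + P (fst (g t)) = snd (g a) + P (fst (g a)).
Proof.
  intros Hc Hf t Ht. split.
  - assert (H := const0 (fun s => fst (g s) + s) a b).
    assert (fst (g t) + t = fst (g a) + a); [|lra].
    apply H; auto.
    + intros x _. apply (continuous_plus (fun s => fst (g s)) (fun s => s)).
      apply Hc. apply continuous_id.
    + intros x Hx. replace 0 with (plus (-1) 1).
      2:{ unfold plus; simpl. ring. }
      apply (is_derive_plus (fun s => fst (g s)) (fun s => s)).
      apply (Hf x Hx). apply (@is_derive_id R_AbsRing).
  - apply (const0 (fun s => snd (g s) + P (fst (g s))) a b); auto.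
    + intros x _. apply (continuous_plus (fun s => snd (g s)) (fun s => P (fst (g s)))).
      apply Hc. apply continuous_comp. apply Hc. apply Pcont.
    + intros x Hx. destruct (Hf x Hx) as [H1 H2]. simpl in H1, H2.
      replace 0 with (plus (D (fst (g x))) (scal (-1) (D (fst (g x))))).
      2:{ unfold plus, scal; simpl. unfold mult; simpl. ring. }
      apply (is_derive_plus (fun s => snd (g s)) (fun s => P (fst (g s)))).
      exact H2.
      apply (is_derive_comp P (fun s => fst (g s))). apply HPD. exact H1.
Qed.


Definition tt_ok (tt : Z -> R) :=
  (forall i, tt i < tt (i + 1)%Z) /\ (forall M, exists i, M < tt i) /\ (forall M, exists i, tt i < M).

Lemma tt_mono tt : (forall i, tt i < tt (i + 1)%Z) -> forall i j, (i < j)%Z -> tt i < tt j.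
Proof.
  intros H i j Hij.
  assert (forall n : nat, tt i < tt (i + Z.of_nat (S n))%Z).
  { induction n.
    - simpl. replace (i + 1)%Z with (i+1)%Z by lia. apply H.
    - eapply Rlt_trans. apply IHn.
      replace (i + Z.of_nat (S (S n)))%Z with ((i + Z.of_nat (S n)) + 1)%Z by lia. apply H. }
  replace j with (i + Z.of_nat (S (Z.to_nat (j - i - 1))))%Z by lia. apply H0.
Qed.

Lemma tt_monole tt : (forall i, tt i < tt (i + 1)%Z) -> forall i j, (i <= j)%Z -> tt i <= tt j.
Proof.
  intros H i j Hij. destruct (Z.eq_dec i j) as [->|]. lra.
  left. apply tt_mono; auto; lia.
Qed.

Lemma tt_find tt : tt_ok tt -> forall t, exists i, tt i <= t < tt (i + 1)%Z.
Proof.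
  intros [H1 [H2 H3]] t.
  destruct (H3 t) as [i1 Hi1]. destruct (H2 t) as [i2 Hi2].
  assert (Hlt : (i1 < i2)%Z).
  { destruct (Z_lt_le_dec i1 i2); auto.
    assert (tt i2 <= tt i1) by (apply tt_monole; auto). lra. }
  assert (forall n : nat, forall i, tt i <= t -> t < tt (i + Z.of_nat n)%Z ->
            exists i, tt i <= t < tt (i + 1)%Z).
  { induction n; intros i Hi Hn.
    - simpl in Hn. replace (i + 0)%Z with i in Hn by lia. lra.
    - destruct (Rlt_le_dec t (tt (i+1)%Z)).
      + exists i. lra.
      + apply (IHn (i+1)%Z); auto.
        replace (i + 1 + Z.of_nat n)%Z with (i + Z.of_nat (S n))%Z by lia. auto. }
  apply (H (Z.to_nat (i2 - i1)) i1). lra.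
  replace (i1 + Z.of_nat (Z.to_nat (i2 - i1)))%Z with i2 by lia. auto.
Qed.

Lemma tt_beyond tt : tt_ok tt -> forall i0 M, exists n : nat, M < tt (i0 + Z.of_nat n)%Z.
Proof.
  intros [H1 [H2 H3]] i0 M.
  destruct (H2 (Rmax M (tt i0))) as [i Hi].
  assert (Hlt : (i0 < i)%Z).
  { destruct (Z_lt_le_dec i0 i); auto.
    assert (tt i <= tt i0) by (apply tt_monole; auto).
    assert (tt i0 <= Rmax M (tt i0)) by apply Rmax_r. lra. }
  exists (Z.to_nat (i - i0)). replace (i0 + Z.of_nat (Z.to_nat (i - i0)))%Z with i by lia.
  assert (M <= Rmax M (tt i0)) by apply Rmax_l. lra.
Qed.

Definition Lm (z : pt) := 0 <= P (fst z) /\ (snd z = P (fst z) \/ snd z = - P (fst z)).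

Lemma local_XY g a b : a < b -> local_traj Xf Yf g a b ->
  ((forall t, a <= t <= b -> 0 <= snd (g t)) /\ (forall t, a < t < b -> follows Xf g t))
  \/
  ((forall t, a <= t <= b -> snd (g t) <= 0) /\ (forall t, a < t < b -> follows Yf g t)).
Proof.
  intros Hab [H|[H|[_ H]]]; auto.
  exfalso. destruct (H ((a+b)/2)) as [H' _]. lra.
  simpl in H'. nra.
Qed.

Lemma piece_Lm g a b : gcont g -> a < b -> local_traj Xf Yf g a b ->
  forall t0, a <= t0 <= b -> Lm (g t0) -> forall t, a <= t <= b -> Lm (g t).
Proof.
  intros Hc Hab Hl t0 Ht0 HL t Ht.
  destruct (local_XY g a b Hab Hl) as [[Hp Hf]|[Hp Hf]].
  - destruct (pieceX g a b Hc Hf t Ht) as [_ E1].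
    destruct (pieceX g a b Hc Hf t0 Ht0) as [_ E2].
    assert (Hv := Hp t Ht). assert (Hv0 := Hp t0 Ht0).
    destruct HL as [HL1 [HL2|HL2]]; unfold Lm.
    + split; [|left]; lra.
    + split; [|left]; lra.
  - destruct (pieceY g a b Hc Hf t Ht) as [_ E1].
    destruct (pieceY g a b Hc Hf t0 Ht0) as [_ E2].
    assert (Hv := Hp t Ht). assert (Hv0 := Hp t0 Ht0).
    destruct HL as [HL1 [HL2|HL2]]; unfold Lm.
    + split; [|right]; lra.
    + split; [|right]; lra.
Qed.

Lemma Lm_all g tt : gcont g -> tt_ok tt ->
  (forall i, local_traj Xf Yf g (tt i) (tt (i + 1)%Z)) -> Lm (g 0) -> forall t, Lm (g t).
Proof.
  intros Hc Htt Hl H0.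
  pose proof Htt as [Hinc _].
  destruct (tt_find tt Htt 0) as [i0 Hi0].
  assert (Hup : forall n : nat, forall t, tt (i0 + Z.of_nat n)%Z <= t <= tt (i0 + Z.of_nat n + 1)%Z -> Lm (g t)).
  { induction n; intros t Ht.
    - simpl in Ht. replace (i0 + 0)%Z with i0 in Ht by lia.
      refine (piece_Lm g (tt i0) (tt (i0+1)%Z) Hc (Hinc i0) (Hl i0) 0 _ H0 t Ht). lra.
    - replace (i0 + Z.of_nat (S n))%Z with (i0 + Z.of_nat n + 1)%Z in Ht by lia.
      set (j := (i0 + Z.of_nat n + 1)%Z) in *.
      refine (piece_Lm g (tt j) (tt (j+1)%Z) Hc (Hinc j) (Hl j) (tt j) _ _ t Ht).
      pose proof (Hinc j). lra.
      apply IHn. pose proof (Hinc (i0 + Z.of_nat n)%Z). unfold j. lra. }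
  assert (Hdn : forall n : nat, forall t, tt (i0 - Z.of_nat n)%Z <= t <= tt (i0 - Z.of_nat n + 1)%Z -> Lm (g t)).
  { induction n; intros t Ht.
    - simpl in Ht. replace (i0 - 0)%Z with i0 in Ht by lia.
      refine (piece_Lm g (tt i0) (tt (i0+1)%Z) Hc (Hinc i0) (Hl i0) 0 _ H0 t Ht). lra.
    - set (j := (i0 - Z.of_nat (S n))%Z) in *.
      assert (E : (i0 - Z.of_nat n)%Z = (j + 1)%Z) by (unfold j; lia).
      refine (piece_Lm g (tt j) (tt (j+1)%Z) Hc (Hinc j) (Hl j) (tt (j+1)%Z) _ _ t Ht).
      pose proof (Hinc j). lra.
      rewrite <- E. apply IHn. pose proof (Hinc (i0 - Z.of_nat n)%Z). lra. }
  intros t. destruct (tt_find tt Htt t) as [i Hi].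
  destruct (Z_le_gt_dec i0 i).
  - apply (Hup (Z.to_nat (i - i0))). replace (i0 + Z.of_nat (Z.to_nat (i - i0)))%Z with i by lia. lra.
  - apply (Hdn (Z.to_nat (i0 - i))). replace (i0 - Z.of_nat (Z.to_nat (i0 - i)))%Z with i by lia. lra.
Qed.


Definition XC g a b := (forall t, a <= t <= b -> 0 <= snd (g t)) /\ (forall t, a < t < b -> follows Xf g t).
Definition YC g a b := (forall t, a <= t <= b -> snd (g t) <= 0) /\ (forall t, a < t < b -> follows Yf g t).

Lemma gpair (g : R -> pt) t x y : fst (g t) = x -> snd (g t) = y -> g t = (x, y).
Proof. intros H1 H2. rewrite (surjective_pairing (g t)). rewrite H1, H2. reflexivity. Qed.

Lemma fwdR g tt : gcont g -> tt_ok tt -> (forall i, local_traj Xf Yf g (tt i) (tt (i + 1)%Z)) ->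
  forall t0 i0, tt i0 <= t0 < tt (i0 + 1)%Z -> XC g (tt i0) (tt (i0 + 1)%Z) ->
  forall x0 L, g t0 = (x0, P x0) -> (forall s, 0 < s < L -> 0 < P (x0 + s)) ->
  forall s, 0 <= s <= L -> g (t0 + s) = (x0 + s, P (x0 + s)).
Proof.
  intros Hc Htt Hl t0 i0 Hi0 HX x0 L Hg0 HP.
  pose proof Htt as [Hinc _].
  assert (Hfx : fst (g t0) = x0) by (rewrite Hg0; reflexivity).
  assert (Hfy : snd (g t0) = P x0) by (rewrite Hg0; reflexivity).
  assert (S : forall n : nat, forall t, t0 <= t <= tt (i0 + Z.of_nat n + 1)%Z -> t <= t0 + L ->
             g t = (x0 + (t - t0), P (x0 + (t - t0)))).
  { induction n; intros t Ht HtL.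
    - simpl in Ht. replace (i0 + 0 + 1)%Z with (i0 + 1)%Z in Ht by lia.
      destruct HX as [_ HX].
      destruct (pieceX g _ _ Hc HX t ltac:(lra)) as [E1 E2].
      destruct (pieceX g _ _ Hc HX t0 ltac:(lra)) as [E3 E4].
      apply gpair. lra. assert (fst (g t) = x0 + (t - t0)) by lra.
      rewrite H in E2. rewrite Hfx, Hfy in E4. lra.
    - set (j := (i0 + Z.of_nat n + 1)%Z) in *.
      destruct (Rle_lt_dec t (tt j)) as [Hle|Hlt].
      + apply IHn; auto. lra.
      + assert (Hj : tt (i0 + 1)%Z <= tt j) by (apply tt_monole; auto; unfold j; lia).
        assert (Ga := IHn (tt j) ltac:(lra) ltac:(lra)).
        assert (Hpos : 0 < P (x0 + (tt j - t0))) by (apply HP; lra).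
        replace (i0 + Z.of_nat (S n) + 1)%Z with (j + 1)%Z in Ht by (unfold j; lia).
        destruct (local_XY g _ _ (Hinc j) (Hl j)) as [[_ HX']|[HY _]].
        * destruct (pieceX g _ _ Hc HX' t ltac:(lra)) as [E1 E2].
          rewrite Ga in E1, E2. simpl in E1, E2.
          apply gpair. lra. assert (fst (g t) = x0 + (t - t0)) by lra.
          rewrite H in E2. lra.
        * assert (HH := HY (tt j) ltac:(pose proof (Hinc j); lra)). rewrite Ga in HH. simpl in HH. lra. }
  intros s Hs.
  destruct (tt_beyond tt Htt (i0 + 1)%Z (t0 + s)) as [n Hn].
  replace (x0 + s) with (x0 + (t0 + s - t0)) by ring.
  apply (S n). split. lra. replace (i0 + Z.of_nat n + 1)%Z with (i0 + 1 + Z.of_nat n)%Z by lia. lra. lra.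
Qed.

Lemma fwdL g tt : gcont g -> tt_ok tt -> (forall i, local_traj Xf Yf g (tt i) (tt (i + 1)%Z)) ->
  forall t0 i0, tt i0 <= t0 < tt (i0 + 1)%Z -> YC g (tt i0) (tt (i0 + 1)%Z) ->
  forall x0 L, g t0 = (x0, - P x0) -> (forall s, 0 < s < L -> 0 < P (x0 - s)) ->
  forall s, 0 <= s <= L -> g (t0 + s) = (x0 - s, - P (x0 - s)).
Proof.
  intros Hc Htt Hl t0 i0 Hi0 HX x0 L Hg0 HP.
  pose proof Htt as [Hinc _].
  assert (Hfx : fst (g t0) = x0) by (rewrite Hg0; reflexivity).
  assert (Hfy : snd (g t0) = - P x0) by (rewrite Hg0; reflexivity).
  assert (S : forall n : nat, forall t, t0 <= t <= tt (i0 + Z.of_nat n + 1)%Z -> t <= t0 + L ->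
             g t = (x0 - (t - t0), - P (x0 - (t - t0)))).
  { induction n; intros t Ht HtL.
    - simpl in Ht. replace (i0 + 0 + 1)%Z with (i0 + 1)%Z in Ht by lia.
      destruct HX as [_ HX].
      destruct (pieceY g _ _ Hc HX t ltac:(lra)) as [E1 E2].
      destruct (pieceY g _ _ Hc HX t0 ltac:(lra)) as [E3 E4].
      apply gpair. lra. assert (fst (g t) = x0 - (t - t0)) by lra.
      rewrite H in E2. rewrite Hfx, Hfy in E4. lra.
    - set (j := (i0 + Z.of_nat n + 1)%Z) in *.
      destruct (Rle_lt_dec t (tt j)) as [Hle|Hlt].
      + apply IHn; auto. lra.
      + assert (Hj : tt (i0 + 1)%Z <= tt j) by (apply tt_monole; auto; unfold j; lia).
        assert (Ga := IHn (tt j) ltac:(lra) ltac:(lra)).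
        assert (Hpos : 0 < P (x0 - (tt j - t0))) by (apply HP; lra).
        replace (i0 + Z.of_nat (S n) + 1)%Z with (j + 1)%Z in Ht by (unfold j; lia).
        destruct (local_XY g _ _ (Hinc j) (Hl j)) as [[HY _]|[_ HX']].
        * assert (HH := HY (tt j) ltac:(pose proof (Hinc j); lra)). rewrite Ga in HH. simpl in HH. lra.
        * destruct (pieceY g _ _ Hc HX' t ltac:(lra)) as [E1 E2].
          rewrite Ga in E1, E2. simpl in E1, E2.
          apply gpair. lra. assert (fst (g t) = x0 - (t - t0)) by lra.
          rewrite H in E2. lra. }
  intros s Hs.
  destruct (tt_beyond tt Htt (i0 + 1)%Z (t0 + s)) as [n Hn].
  replace (x0 - s) with (x0 - (t0 + s - t0)) by ring.
  apply (S n). split. lra. replace (i0 + Z.of_nat n + 1)%Z with (i0 + 1 + Z.of_nat n)%Z by lia. lra. lra.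
Qed.

Lemma piece_at g tt : tt_ok tt -> (forall i, local_traj Xf Yf g (tt i) (tt (i + 1)%Z)) ->
  forall t, exists i, tt i <= t < tt (i + 1)%Z /\
    (XC g (tt i) (tt (i + 1)%Z) \/ YC g (tt i) (tt (i + 1)%Z)).
Proof.
  intros Htt Hl t. destruct (tt_find tt Htt t) as [i Hi]. exists i. split; auto.
  destruct Htt as [Hinc _]. apply (local_XY g _ _ (Hinc i) (Hl i)).
Qed.

Lemma noX_at g a b t1 x1 : gcont g -> a <= t1 < b -> XC g a b -> g t1 = (x1, 0) ->
  P x1 = 0 -> (forall x, x1 < x -> P x < 0) -> False.
Proof.
  intros Hc Ht [Hp Hf] Hg HP0 Hneg.
  destruct (pieceX g a b Hc Hf ((t1 + b)/2) ltac:(lra)) as [E1 E2].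
  destruct (pieceX g a b Hc Hf t1 ltac:(lra)) as [E3 E4].
  rewrite Hg in E3, E4. simpl in E3, E4.
  assert (fst (g ((t1+b)/2)) = x1 + ((t1+b)/2 - t1)) by lra.
  assert (Hn := Hneg (fst (g ((t1+b)/2))) ltac:(lra)).
  assert (Hq := Hp ((t1+b)/2) ltac:(lra)). lra.
Qed.

Lemma noY_at g a b t1 x1 : gcont g -> a <= t1 < b -> YC g a b -> g t1 = (x1, 0) ->
  P x1 = 0 -> (forall x, x < x1 -> P x < 0) -> False.
Proof.
  intros Hc Ht [Hp Hf] Hg HP0 Hneg.
  destruct (pieceY g a b Hc Hf ((t1 + b)/2) ltac:(lra)) as [E1 E2].
  destruct (pieceY g a b Hc Hf t1 ltac:(lra)) as [E3 E4].
  rewrite Hg in E3, E4. simpl in E3, E4.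
  assert (fst (g ((t1+b)/2)) = x1 - ((t1+b)/2 - t1)) by lra.
  assert (Hn := Hneg (fst (g ((t1+b)/2))) ltac:(lra)).
  assert (Hq := Hp ((t1+b)/2) ltac:(lra)). lra.
Qed.

End Dyn.

Lemma edist_nonneg a b : 0 <= edist a b.
Proof. unfold edist. apply sqrt_pos. Qed.

Lemma edist_fst a b : Rabs (fst a - fst b) <= edist a b.
Proof.
  unfold edist. rewrite <- sqrt_Rsqr_abs. apply sqrt_le_1_alt. unfold Rsqr. destruct a as [a1 a2], b as [b1 b2]. simpl. rewrite !Rmult_1_r. pose proof (Rle_0_sqr (a1 - b1)). pose proof (Rle_0_sqr (a2 - b2)). unfold Rsqr in *. lra.
Qed.

Lemma edist_snd a b : Rabs (snd a - snd b) <= edist a b.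
Proof.
  unfold edist. rewrite <- sqrt_Rsqr_abs. apply sqrt_le_1_alt. unfold Rsqr. destruct a as [a1 a2], b as [b1 b2]. simpl. rewrite !Rmult_1_r. pose proof (Rle_0_sqr (a1 - b1)). pose proof (Rle_0_sqr (a2 - b2)). unfold Rsqr in *. lra.
Qed.

Lemma edist_le a b : edist a b <= Rabs (fst a - fst b) + Rabs (snd a - snd b).
Proof.
  unfold edist. set (u := fst a - fst b). set (v := snd a - snd b).
  rewrite <- (sqrt_Rsqr (Rabs u + Rabs v)).
  2:{ pose proof (Rabs_pos u); pose proof (Rabs_pos v); lra. }
  apply sqrt_le_1_alt. unfold Rsqr.
  pose proof (Rabs_pos u); pose proof (Rabs_pos v).
  replace (u^2) with (Rabs u * Rabs u). replace (v^2) with (Rabs v * Rabs v). nra.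
  rewrite <- Rabs_mult. simpl. rewrite Rmult_1_r. apply Rabs_pos_eq. nra.
  rewrite <- Rabs_mult. simpl. rewrite Rmult_1_r. apply Rabs_pos_eq. nra.
Qed.

Lemma edist_sym a b : edist a b = edist b a.
Proof. unfold edist. f_equal. ring. Qed.

Lemma edist_refl a : edist a a = 0.
Proof. unfold edist. replace ((fst a - fst a) ^ 2 + (snd a - snd a) ^ 2) with 0 by ring. apply sqrt_0. Qed.

Lemma glb_bounds (S : R -> Prop) x m : S x -> (forall y, S y -> m <= y) ->
  real (Glb_Rbar S) <= x /\ m <= real (Glb_Rbar S).
Proof.
  intros Hx Hm. destruct (Glb_Rbar_correct S) as [H1 H2].
  assert (A := H1 x Hx). assert (B := H2 m (fun y Hy => Hm y Hy)).
  destruct (Glb_Rbar S); simpl in *; try contradiction; lra.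
Qed.

Lemma glb_nonneg (S : R -> Prop) : (forall y, S y -> 0 <= y) -> 0 <= real (Glb_Rbar S).
Proof.
  intros Hm. destruct (Glb_Rbar_correct S) as [H1 H2].
  assert (B := H2 0 (fun y Hy => Hm y Hy)).
  destruct (Glb_Rbar S); simpl in *; try contradiction; lra.
Qed.

Lemma lub_bounds (S : R -> Prop) x M : S x -> (forall y, S y -> y <= M) ->
  x <= real (Lub_Rbar S) /\ real (Lub_Rbar S) <= M.
Proof.
  intros Hx Hm. destruct (Lub_Rbar_correct S) as [H1 H2].
  assert (A := H1 x Hx). assert (B := H2 M (fun y Hy => Hm y Hy)).
  destruct (Lub_Rbar S); simpl in *; try contradiction; lra.
Qed.

Lemma lub_le (S : R -> Prop) M : 0 <= M -> (forall y, S y -> y <= M) -> real (Lub_Rbar S) <= M.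
Proof.
  intros HM Hm. destruct (Lub_Rbar_correct S) as [H1 H2].
  assert (B := H2 M (fun y Hy => Hm y Hy)).
  destruct (Lub_Rbar S); simpl in *; try contradiction; lra.
Qed.

Lemma pdist_le a (B : pt -> Prop) b : B b -> pdist a B <= edist a b.
Proof.
  intros Hb. unfold pdist. apply (glb_bounds _ _ 0).
  exists b; auto. intros y [b' [_ ->]]. apply edist_nonneg.
Qed.

Lemma pdist_ge a (B : pt -> Prop) b c : B b -> (forall b, B b -> c <= edist a b) -> c <= pdist a B.
Proof.
  intros Hb Hc. unfold pdist. apply (glb_bounds _ (edist a b)).
  exists b; auto. intros y [b' [Hb' ->]]. auto.
Qed.

Lemma pdist_nonneg a B : 0 <= pdist a B.
Proof. unfold pdist. apply glb_nonneg. intros y [b [_ ->]]. apply edist_nonneg. Qed.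

Lemma hdist_le (A B : pt -> Prop) M : 0 <= M ->
  (forall a, A a -> exists b, B b /\ edist a b <= M) ->
  (forall b, B b -> exists a, A a /\ edist b a <= M) -> hdist A B <= M.
Proof.
  intros HM H1 H2. unfold hdist. apply Rmax_lub; apply lub_le; auto.
  - intros y [a [Ha ->]]. destruct (H1 a Ha) as [b [Hb Hd]].
    eapply Rle_trans. apply (pdist_le a B b Hb). auto.
  - intros y [b [Hb ->]]. destruct (H2 b Hb) as [a [Ha Hd]].
    eapply Rle_trans. apply (pdist_le b A a Ha). auto.
Qed.

Lemma hdist_ge (A B : pt -> Prop) a0 b0 c M : A a0 -> B b0 ->
  (forall b, B b -> c <= edist a0 b) -> (forall a b, A a -> B b -> edist a b <= M) ->
  c <= hdist A B.
Proof.
  intros Ha Hb Hc HM. unfold hdist. eapply Rle_trans. 2: apply Rmax_l.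
  eapply Rle_trans. apply (pdist_ge a0 B b0 c Hb Hc).
  apply (lub_bounds _ _ M). exists a0; auto.
  intros y [a [Ha' ->]]. eapply Rle_trans. apply (pdist_le a B b0 Hb). auto.
Qed.

Lemma hdist_refl (A : pt -> Prop) : hdist A A = 0.
Proof.
  apply Rle_antisym.
  - apply hdist_le. lra.
    intros a Ha. exists a. rewrite edist_refl. split; auto; lra.
    intros a Ha. exists a. rewrite edist_refl. split; auto; lra.
  - unfold hdist. eapply Rle_trans. 2: apply Rmax_l.
    destruct (Lub_Rbar_correct (fun r => exists a, A a /\ r = pdist a A)) as [H1 H2].
    destruct (classic (exists a, A a)) as [[a Ha]|Hn].
    + assert (X := H1 _ (ex_intro _ a (conj Ha eq_refl))).
      pose proof (pdist_nonneg a A).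
      destruct (Lub_Rbar _); simpl in *; try contradiction; lra.
    + assert (Rbar_le (Lub_Rbar (fun r => exists a, A a /\ r = pdist a A)) m_infty).
      { apply H2. intros y [a [Ha _]]. exfalso; eauto. }
      destruct (Lub_Rbar _); simpl in *; try contradiction; lra.
Qed.

Lemma hdist_nonneg A B : 0 <= hdist A B.
Proof.
  unfold hdist. eapply Rle_trans. 2: apply Rmax_l.
  destruct (Lub_Rbar_correct (fun r => exists a, A a /\ r = pdist a B)) as [H1 H2].
  destruct (classic (exists a, A a)) as [[a Ha]|Hn].
  + assert (X := H1 _ (ex_intro _ a (conj Ha eq_refl))).
    pose proof (pdist_nonneg a B).
    destruct (Lub_Rbar _); simpl in *; try contradiction; lra.
  + assert (Rbar_le (Lub_Rbar (fun r => exists a, A a /\ r = pdist a B)) m_infty).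
    { apply H2. intros y [a [Ha _]]. exfalso; eauto. }
    destruct (Lub_Rbar _); simpl in *; try contradiction; lra.
Qed.

Definition zfold (a : Z -> R) : nat -> R :=
  fun n => if Nat.eqb n 0 then a 0%Z else a (Z.of_nat n) + a (- Z.of_nat n)%Z.

Lemma zsum_le a b : (forall i, 0 <= a i <= b i) -> ex_series (zfold b) -> zsum a <= zsum b.
Proof.
  intros H Hb. unfold zsum. apply Series_le; auto.
  intros n. destruct (Nat.eqb n 0); simpl; auto.
  pose proof (H (Z.of_nat n)); pose proof (H (- Z.of_nat n)%Z). lra.
Qed.

Lemma zsum_scal c a : zsum (fun i => c * a i) = c * zsum a.
Proof.
  unfold zsum. rewrite <- Series_scal_l. apply Series_ext. intros n.
  destruct (Nat.eqb n 0); ring.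
Qed.

Lemma ex_zfold_le a b : (forall i, 0 <= a i <= b i) -> ex_series (zfold b) -> ex_series (zfold a).
Proof.
  intros H Hb. apply (@ex_series_le R_AbsRing R_CompleteNormedModule (zfold a) (zfold b)); auto.
  intros n. unfold zfold. destruct (Nat.eqb n 0).
  - pose proof (H 0%Z). rewrite Rabs_pos_eq; lra.
  - pose proof (H (Z.of_nat n)); pose proof (H (- Z.of_nat n)%Z). rewrite Rabs_pos_eq; lra.
Qed.

Lemma ex_zfold_scal c a : ex_series (zfold a) -> ex_series (zfold (fun i => c * a i)).
Proof.
  intros H. apply (ex_series_ext (fun n => scal c (zfold a n))).
  intros n. unfold zfold, scal; simpl; unfold mult; simpl. destruct (Nat.eqb n 0); ring.
  apply (@ex_series_scal_l R_AbsRing R_NormedModule c (zfold a)). auto.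
Qed.

Lemma pow_lin n : INR n + 2 <= 4 * (3/2) ^ n.
Proof.
  induction n. simpl. lra. rewrite S_INR. simpl. pose proof (pos_INR n). lra.
Qed.

Lemma ex_dseq_lin (d : Z -> R) C E : 0 <= C -> 0 <= E ->
  (forall j, 0 <= d j <= C + E * INR (Z.abs_nat j)) ->
  ex_series (zfold (fun j => d j * (/ 2) ^ (Z.abs_nat j))).
Proof.
  intros HC HE Hd.
  apply (@ex_series_le R_AbsRing R_CompleteNormedModule _ (fun n => 8 * (C + E) * (3/4) ^ n)).
  - intros n. unfold norm; simpl. unfold abs; simpl. unfold zfold.
    assert (Hq : 0 <= (/2) ^ n) by (apply pow_le; lra).
    assert (Hp := pow_lin n).
    assert (Eq : (3/4) ^ n = (3/2) ^ n * (/2) ^ n) by (rewrite <- Rpow_mult_distr; f_equal; lra).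
    assert (Hp0 : 0 <= INR n) by apply pos_INR.
    destruct (Nat.eqb n 0) eqn:En.
    + apply Nat.eqb_eq in En. subst n. simpl. pose proof (Hd 0%Z). simpl in H.
      rewrite Rabs_pos_eq; nra.
    + assert (A1 := Hd (Z.of_nat n)). assert (A2 := Hd (- Z.of_nat n)%Z).
      replace (Z.abs_nat (Z.of_nat n)) with n in * by lia.
      replace (Z.abs_nat (- Z.of_nat n)) with n in * by lia.
      rewrite Rabs_pos_eq by nra. rewrite Eq.
      assert ((d (Z.of_nat n) + d (- Z.of_nat n)%Z) <= 2 * (C + E) * (INR n + 2)) by nra.
      assert (H3 : d (Z.of_nat n) + d (- Z.of_nat n)%Z <= 8*(C+E)*(3/2)^n).
      { assert (0 <= C + E) by lra.
        assert ((C+E) * (INR n + 2) <= (C+E) * (4 * (3/2)^n)) by (apply Rmult_le_compat_l; lra).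
        lra. }
      replace (8 * (C+E) * ((3/2)^n * (/2)^n)) with ((8*(C+E)*(3/2)^n) * (/2)^n) by ring.
      rewrite <- Rmult_plus_distr_r. apply Rmult_le_compat_r; auto.
  - apply (ex_series_ext (fun n => scal (8 * (C + E)) ((3/4)^n))).
    intros n. reflexivity. apply (@ex_series_scal_l R_AbsRing R_NormedModule). apply ex_series_geom. rewrite Rabs_pos_eq; lra.
Qed.

Lemma compare_metric (s1 s2 : Z -> Z) (H : Z -> Z -> R) c1 c2 : 0 < c1 -> 0 < c2 ->
  (forall i, c1 * IZR (Z.abs (s1 i - s2 i)) <= H (s1 i) (s2 i) <= c2 * IZR (Z.abs (s1 i - s2 i))) ->
  ex_series (zfold (fun j => IZR (Z.abs (s1 j - s2 j)) * (/ 2) ^ (Z.abs_nat j))) ->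
  c1 * dseq s1 s2 <= zsum (fun i => (/ 2) ^ (Z.abs_nat i) * H (s1 i) (s2 i)) <= c2 * dseq s1 s2.
Proof.
  intros Hc1 Hc2 HH Hex.
  assert (Hab : forall i, 0 <= IZR (Z.abs (s1 i - s2 i))) by (intros; apply IZR_le; lia).
  assert (Hq : forall i, 0 <= (/2) ^ (Z.abs_nat i)) by (intros; apply pow_le; lra).
  assert (B2 : forall i, 0 <= (/ 2) ^ (Z.abs_nat i) * H (s1 i) (s2 i) <=
                 c2 * (IZR (Z.abs (s1 i - s2 i)) * (/ 2) ^ (Z.abs_nat i))).
  { intros i. specialize (HH i). specialize (Hab i). specialize (Hq i).
    assert (0 <= c1 * IZR (Z.abs (s1 i - s2 i))) by (apply Rmult_le_pos; lra).
    split. apply Rmult_le_pos; lra.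
    replace (c2 * (IZR (Z.abs (s1 i - s2 i)) * (/ 2) ^ Z.abs_nat i)) with
      ((/ 2) ^ Z.abs_nat i * (c2 * IZR (Z.abs (s1 i - s2 i)))) by ring.
    apply Rmult_le_compat_l; lra. }
  assert (B1 : forall i, 0 <= c1 * (IZR (Z.abs (s1 i - s2 i)) * (/ 2) ^ (Z.abs_nat i)) <=
                 (/ 2) ^ (Z.abs_nat i) * H (s1 i) (s2 i)).
  { intros i. specialize (HH i). specialize (Hab i). specialize (Hq i).
    split. apply Rmult_le_pos. lra. apply Rmult_le_pos; lra.
    replace (c1 * (IZR (Z.abs (s1 i - s2 i)) * (/ 2) ^ Z.abs_nat i)) with
      ((/ 2) ^ Z.abs_nat i * (c1 * IZR (Z.abs (s1 i - s2 i)))) by ring.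
    apply Rmult_le_compat_l; lra. }
  unfold dseq. split.
  - rewrite <- zsum_scal. apply zsum_le; auto.
    apply (ex_zfold_le _ _ B2). apply ex_zfold_scal. auto.
  - rewrite <- zsum_scal. apply zsum_le; auto. apply ex_zfold_scal. auto.
Qed.

Lemma is_derive_shift (f : R -> R) x c l : is_derive f (x + c) l -> is_derive (fun s => f (s + c)) x l.
Proof.
  intros H.
  assert (Hd : is_derive (fun s : R => s + c) x 1).
  { auto_derive; auto; ring. }
  pose proof (is_derive_comp f (fun s => s + c) x l 1 H Hd) as H2.
  replace l with (scal 1 l). exact H2.
  unfold scal; simpl; unfold mult; simpl; ring.
Qed.

Lemma cont_shift (f : R -> R) x c : continuous f (x + c) -> continuous (fun s => f (s + c)) x.
Proof.
  intros H. apply (continuous_comp (fun s : R => s + c) f x); auto.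
  apply (@ex_derive_continuous R_AbsRing R_NormedModule). auto_derive; auto.
Qed.

Lemma follows_shift F g t c : follows F g (t + c) -> follows F (fun s => g (s + c)) t.
Proof.
  intros [H1 H2]. split.
  - apply (is_derive_shift (fun s => fst (g s))). exact H1.
  - apply (is_derive_shift (fun s => snd (g s))). exact H2.
Qed.

Lemma shift_global X Y g c : global_traj X Y g -> global_traj X Y (fun t => g (t + c)).
Proof.
  intros [Hc [tt [H1 [H2 [H3 H4]]]]]. split.
  - intros t. split; apply (cont_shift (fun s => _ (g s))); apply Hc.
  - exists (fun i => tt i - c). split; [|split; [|split]].
    + intros i. specialize (H1 i). lra.
    + intros M. destruct (H2 (M + c)) as [i Hi]. exists i. lra.
    + intros M. destruct (H3 (M + c)) as [i Hi]. exists i. lra.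
    + intros i. specialize (H4 i).
      destruct H4 as [[Ha Hb]|[[Ha Hb]|[Ha Hb]]].
      * left. split.
        -- intros t Ht. apply Ha. lra.
        -- intros t Ht. apply follows_shift. apply Hb. lra.
      * right; left. split.
        -- intros t Ht. apply Ha. lra.
        -- intros t Ht. apply follows_shift. apply Hb. lra.
      * right; right. split.
        -- intros t Ht. apply Ha. lra.
        -- intros t Ht. destruct (Hb (t + c) ltac:(lra)) as [Hb1 Hb2]. split; auto.
           apply follows_shift. auto.
Qed.

Section Itin.
Variables (X Y : vf) (Lam : pt -> Prop) (I : Z -> pt -> Prop) (Ps : R -> Prop)
  (valid : Z -> Prop) (path : Z -> R -> pt).
Definition TTpt (z : pt) := exists x, Ps x /\ z = (x, 0).
Hypothesis HA : forall g, Omega X Y Lam g -> forall t0, TTpt (g t0) ->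
  exists n, valid n /\ forall th, 0 <= th <= 1 -> g (t0 + th) = path n th.
Hypothesis HB : forall g, Omega X Y Lam g -> forall T0, exists t, T0 <= t <= T0 + 1 /\ TTpt (g t).
Hypothesis HC1 : forall n th, valid n -> 0 < th < 1 -> I n (path n th).
Hypothesis HC2 : forall n, valid n -> TTpt (path n 0) /\ TTpt (path n 1).
Hypothesis HC3 : forall n z, I n z -> ~ TTpt z.
Hypothesis HC4 : forall n m z, I n z -> I m z -> n = m.
Hypothesis HLT : forall z, TTpt z -> Lam z.

Lemma geq (g : R -> pt) x y : x = y -> g x = g y.
Proof. intros ->; reflexivity. Qed.

Lemma TT_next g : Omega X Y Lam g -> forall t0, TTpt (g t0) ->
  TTpt (g (t0 + 1)) /\ forall th, 0 < th < 1 -> ~ TTpt (g (t0 + th)).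
Proof.
  intros Hg t0 Ht0. destruct (HA g Hg t0 Ht0) as [n [Hv Hn]]. split.
  - rewrite Hn by lra. apply HC2; auto.
  - intros th Hth. rewrite Hn by lra. apply (HC3 n). apply HC1; auto.
Qed.

Lemma TT_prev g : Omega X Y Lam g -> forall t0, TTpt (g t0) -> TTpt (g (t0 - 1)).
Proof.
  intros Hg t0 Ht0.
  destruct (HB g Hg (t0 - 1.5)) as [t [Ht HT]].
  destruct (TT_next g Hg t HT) as [HT1 Hno].
  destruct (Rtotal_order (t0 - t) 1) as [Hl|[He|Hgt]].
  - exfalso. apply (Hno (t0 - t)). lra. rewrite (geq g (t + (t0 - t)) t0) by ring. auto.
  - rewrite (geq g (t0 - 1) t) by lra. auto.
  - exfalso. destruct (TT_next g Hg (t+1) HT1) as [_ Hno2].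
    apply (Hno2 (t0 - (t + 1))). lra. rewrite (geq g (t + 1 + (t0 - (t+1))) t0) by ring. auto.
Qed.

Lemma TT_all g : Omega X Y Lam g -> forall tau, TTpt (g tau) -> forall j, TTpt (g (tau + IZR j)).
Proof.
  intros Hg tau Ht.
  assert (forall n, TTpt (g (tau + INR n)) /\ TTpt (g (tau - INR n))).
  { induction n.
    - simpl. rewrite (geq g (tau + 0) tau) by ring. rewrite (geq g (tau - 0) tau) by ring. auto.
    - destruct IHn as [H1 H2]. rewrite S_INR. split.
      + rewrite (geq g _ (tau + INR n + 1)) by ring. apply TT_next; auto.
      + rewrite (geq g _ (tau - INR n - 1)) by ring. apply TT_prev; auto. }
  intros j. destruct (Z_le_gt_dec 0 j).
  - replace j with (Z.of_nat (Z.to_nat j)) by lia. rewrite <- INR_IZR_INZ. apply H.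
  - replace j with (- Z.of_nat (Z.to_nat (- j)))%Z by lia. rewrite opp_IZR, <- INR_IZR_INZ.
    rewrite (geq g _ (tau - INR (Z.to_nat (- j)))) by ring. apply H.
Qed.

Definition Struct (g : R -> pt) tau (a : Z -> Z) :=
  -1 < tau <= 0 /\ forall j, valid (a j) /\
    forall th, 0 <= th <= 1 -> g (tau + IZR j + th) = path (a j) th.

Lemma struct_ex g : Omega X Y Lam g -> exists tau a, Struct g tau a.
Proof.
  intros Hg. destruct (HB g Hg (-1)) as [t [Ht HT]].
  assert (exists tau, -1 < tau <= 0 /\ TTpt (g tau)) as [tau [Htau HTau]].
  { destruct (Req_dec t (-1)) as [->|Hne].
    - exists 0. split. lra. rewrite (geq g 0 (-1 + 1)) by ring. apply TT_next; auto.
    - exists t. split; auto. lra. }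
  exists tau.
  exists (fun j => epsilon (inhabits 0%Z) (fun n => valid n /\
            forall th, 0 <= th <= 1 -> g (tau + IZR j + th) = path n th)).
  split; auto. intros j.
  apply (epsilon_spec (inhabits 0%Z) (fun n => valid n /\
            forall th, 0 <= th <= 1 -> g (tau + IZR j + th) = path n th)).
  apply HA; auto. apply TT_all; auto.
Qed.

Lemma struct_itin g tau a : Struct g tau a -> is_itin I Ps g a.
Proof.
  intros [Htau Hs] j. destruct (Hs j) as [Hv Hp].
  destruct (Req_dec tau 0) as [->|Hne].
  - right. destruct (HC2 _ Hv) as [[x [Hx Ex]] _]. exists x. split; auto. split.
    + rewrite <- Ex. rewrite <- Hp by lra. apply geq. ring.
    + rewrite (geq g _ (0 + IZR j + /2)) by ring. rewrite Hp by lra. apply HC1; auto. lra.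
  - left. assert (tau < 0) by (destruct Htau as [_ [Hl|He]]; [lra|contradiction]).
    rewrite (geq g _ (tau + IZR j + - tau)) by ring. rewrite Hp by lra. apply HC1; auto. lra.
Qed.

Lemma itin_uniq g s1 s2 : is_itin I Ps g s1 -> is_itin I Ps g s2 -> forall j, s1 j = s2 j.
Proof.
  intros H1 H2 j. destruct (H1 j) as [A|[x [Hx [E A]]]]; destruct (H2 j) as [B|[y [Hy [F B]]]].
  - eapply HC4; eauto.
  - exfalso. apply (HC3 _ _ A). exists y. auto.
  - exfalso. apply (HC3 _ _ B). exists x. auto.
  - eapply HC4; eauto.
Qed.

Lemma itin_val g tau a : Struct g tau a -> forall j, itin I Ps g j = a j.
Proof.
  intros Hs. assert (Hi : is_itin I Ps g a) by (eapply struct_itin; eauto).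
  apply (itin_uniq g). unfold itin. apply epsilon_spec. exists a; auto. auto.
Qed.

Lemma itin_is g : Omega X Y Lam g -> is_itin I Ps g (itin I Ps g).
Proof.
  intros Hg. destruct (struct_ex g Hg) as [tau [a Hs]].
  unfold itin. apply epsilon_spec. exists a. eapply struct_itin; eauto.
Qed.

Lemma itin_valid g : Omega X Y Lam g -> forall j, valid (itin I Ps g j).
Proof.
  intros Hg j. destruct (struct_ex g Hg) as [tau [a Hs]].
  rewrite (itin_val g tau a Hs). apply Hs.
Qed.

Lemma struct_tau0 g tau a : Struct g tau a -> TTpt (g 0) -> tau = 0.
Proof.
  intros [Htau Hs] HT. destruct (Req_dec tau 0); auto. exfalso.
  assert (tau < 0) by (destruct Htau as [_ [Hl|He]]; [lra|contradiction]).
  destruct (Hs 0%Z) as [Hv Hp].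
  rewrite (geq g 0 (tau + IZR 0 + - tau)) in HT by (simpl; ring).
  rewrite Hp in HT by lra. apply (HC3 (a 0%Z) _ (HC1 (a 0%Z) (- tau) Hv ltac:(lra)) HT).
Qed.

Lemma rep_spec g : Omega X Y Lam g ->
  let h := rep X Y Lam I Ps g in
  Omega X Y Lam h /\ (forall j, itin I Ps h j = itin I Ps g j) /\ exists x, Ps x /\ h 0 = (x, 0).
Proof.
  intros Hg. unfold rep. apply epsilon_spec.
  destruct (struct_ex g Hg) as [tau [a Hs]].
  exists (fun t => g (t + tau)).
  assert (Hs' : Struct (fun t => g (t + tau)) 0 a).
  { destruct Hs as [Htau Hs]. split. lra. intros j. destruct (Hs j) as [Hv Hp]. split; auto.
    intros th Hth. rewrite <- Hp by auto. apply geq. ring. }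
  assert (HT : TTpt (g tau)).
  { destruct Hs' as [_ Hs'']. destruct (Hs'' 0%Z) as [Hv Hp]. assert (H := Hp 0 ltac:(lra)).
    rewrite (geq g _ tau) in H by (simpl; ring). rewrite H. apply HC2; auto. }
  split; [|split].
  - destruct Hg as [Hgl HL]. split. apply shift_global; auto.
    rewrite (geq g _ tau) by ring. apply HLT; auto.
  - intros j. rewrite (itin_val _ _ _ Hs'). rewrite (itin_val _ _ _ Hs). reflexivity.
  - destruct HT as [x [Hx E]]. exists x. split; auto. rewrite <- E. apply geq. ring.
Qed.

Definition Cset (n : Z) : pt -> Prop := fun z => exists th, 0 <= th <= 1 /\ z = path n th.

Lemma rep_seg g : Omega X Y Lam g -> forall i, seg (rep X Y Lam I Ps g) i = Cset (itin I Ps g i).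
Proof.
  intros Hg i. destruct (rep_spec g Hg) as [Hh [Hit H0]].
  set (h := rep X Y Lam I Ps g) in *.
  destruct (struct_ex h Hh) as [tau [a Hs]].
  assert (tau = 0) by (apply (struct_tau0 h tau a Hs); auto). subst tau.
  rewrite <- Hit. rewrite (itin_val h 0 a Hs).
  destruct Hs as [_ Hs]. destruct (Hs i) as [_ Hp].
  apply functional_extensionality; intro z; apply propositional_extensionality; split.
  - intros [t [Ht ->]]. exists (t - IZR i). split. lra.
    rewrite <- Hp by lra. apply geq. ring.
  - intros [th [Hth ->]]. exists (IZR i + th). split. lra. rewrite <- Hp by lra. apply geq. ring.
Qed.

Lemma rho_eq g1 g2 : Omega X Y Lam g1 -> Omega X Y Lam g2 ->
  rho X Y Lam I Ps g1 g2 =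
  zsum (fun i => (/ 2) ^ (Z.abs_nat i) * hdist (Cset (itin I Ps g1 i)) (Cset (itin I Ps g2 i))).
Proof.
  intros H1 H2. unfold rho. f_equal. apply functional_extensionality. intros i.
  rewrite (rep_seg g1 H1), (rep_seg g2 H2). reflexivity.
Qed.

Lemma homeo_generic (target : (Z -> Z) -> Prop) c1 c2 :
  0 < c1 -> 0 < c2 ->
  (forall n m, valid n -> valid m ->
     c1 * IZR (Z.abs (n - m)) <= hdist (Cset n) (Cset m) <= c2 * IZR (Z.abs (n - m))) ->
  (forall g1 g2, Omega X Y Lam g1 -> Omega X Y Lam g2 ->
     ex_series (zfold (fun j => IZR (Z.abs (itin I Ps g1 j - itin I Ps g2 j)) * (/ 2) ^ (Z.abs_nat j)))) ->
  (forall g, Omega X Y Lam g -> target (itin I Ps g)) ->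
  itinerary_homeo X Y Lam I Ps target.
Proof.
  intros Hc1 Hc2 HH Hex Ht.
  assert (Cmp : forall g1 g2, Omega X Y Lam g1 -> Omega X Y Lam g2 ->
    c1 * dseq (itin I Ps g1) (itin I Ps g2) <= rho X Y Lam I Ps g1 g2 <=
    c2 * dseq (itin I Ps g1) (itin I Ps g2)).
  { intros g1 g2 H1 H2. rewrite rho_eq by auto.
    apply (compare_metric (itin I Ps g1) (itin I Ps g2) (fun n m => hdist (Cset n) (Cset m))); auto.
    intros i. apply HH; apply itin_valid; auto. }
  split; [|split].
  - intros g Hg. split. apply itin_is; auto. apply Ht; auto.
  - intros g1 H1 eps Heps. exists (c1 * eps). split. apply Rmult_lt_0_compat; auto.
    intros g2 H2 Hr. destruct (Cmp g1 g2 H1 H2) as [A _].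
    apply (Rmult_lt_reg_l c1); auto. lra.
  - intros g1 H1 eps Heps. exists (eps / c2). split. apply Rdiv_lt_0_compat; auto.
    intros g2 H2 Hr. destruct (Cmp g1 g2 H1 H2) as [_ A].
    apply (Rmult_lt_compat_l c2) in Hr; auto.
    replace (c2 * (eps / c2)) with eps in Hr by (field; lra). lra.
Qed.

End Itin.

Definition fl (x : R) : Z := (up x - 1)%Z.
Lemma fl_spec x : IZR (fl x) <= x < IZR (fl x) + 1.
Proof. unfold fl. rewrite minus_IZR. destruct (archimed x). simpl. lra. Qed.

Lemma IZR_lt_succ a b : IZR a < IZR b + 1 -> (a <= b)%Z.
Proof. intros H. rewrite <- (plus_IZR b 1) in H. apply lt_IZR in H. lia. Qed.

Lemma IZR_sub_le a b c : (a - b <= c)%Z -> IZR a - IZR b <= IZR c.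
Proof. intros H. rewrite <- minus_IZR. apply IZR_le. auto. Qed.

Lemma cos_int y j : cos (y + 2 * PI * IZR j) = cos y.
Proof.
  destruct (Z_le_gt_dec 0 j).
  - replace j with (Z.of_nat (Z.to_nat j)) by lia. rewrite <- INR_IZR_INZ.
    replace (y + 2 * PI * INR (Z.to_nat j)) with (y + 2 * INR (Z.to_nat j) * PI) by ring.
    apply cos_period.
  - replace j with (- Z.of_nat (Z.to_nat (- j)))%Z by lia. rewrite opp_IZR, <- INR_IZR_INZ.
    set (n := Z.to_nat (-j)).
    rewrite <- (cos_period (y + 2 * PI * - INR n) n). f_equal. ring.
Qed.

Lemma Pinf_shift j x : Pinf (IZR j + x) = Pinf x.
Proof. unfold Pinf. f_equal. f_equal. rewrite <- (cos_int (2 * PI * x) j). f_equal. ring. Qed.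

Lemma PI_pos : 0 < PI.
Proof. apply PI_RGT_0. Qed.

Lemma Pinf_nonneg x : 0 <= Pinf x.
Proof. unfold Pinf. pose proof (COS_bound (2*PI*x)). pose proof PI_pos.
  apply Rdiv_le_0_compat; lra. Qed.

Lemma Pinf_le x : Pinf x <= 2 / PI.
Proof. unfold Pinf. pose proof (COS_bound (2*PI*x)). pose proof PI_pos.
  unfold Rdiv. apply Rmult_le_compat_r. left; apply Rinv_0_lt_compat; lra. lra. Qed.

Lemma Pinf_int j : Pinf (IZR j) = 0.
Proof.
  replace (IZR j) with (IZR j + 0) by ring. rewrite Pinf_shift. unfold Pinf.
  rewrite Rmult_0_r, cos_0. unfold Rdiv. ring.
Qed.

Lemma Pinf_half j : Pinf (IZR j + /2) = 2 / PI.
Proof.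
  rewrite Pinf_shift. unfold Pinf. replace (2 * PI * /2) with PI by field.
  rewrite cos_PI. field. pose proof PI_pos. lra.
Qed.

Lemma Pinf_pos01 th : 0 < th < 1 -> 0 < Pinf th.
Proof.
  intros Hth. unfold Pinf. pose proof PI_pos.
  apply Rdiv_lt_0_compat; auto.
  destruct (Rle_lt_dec th (/2)).
  - assert (cos (2 * PI * th) < cos 0).
    { apply cos_decreasing_1; nra. }
    rewrite cos_0 in H0. lra.
  - assert (cos (2 * PI * th) < cos (2 * PI)).
    { apply cos_increasing_1; nra. }
    rewrite cos_2PI in H0. lra.
Qed.

Lemma Pinf_pos j x : IZR j < x < IZR j + 1 -> 0 < Pinf x.
Proof.
  intros H. replace x with (IZR j + (x - IZR j)) by ring. rewrite Pinf_shift.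
  apply Pinf_pos01. lra.
Qed.

Definition Dinf (x : R) := 2 * sin (2 * PI * x).

Lemma Pinf_deriv x : is_derive Pinf x (Dinf x).
Proof.
  unfold Pinf, Dinf. auto_derive; auto. pose proof PI_pos. field. lra.
Qed.

Definition pathinf (n : Z) (th : R) : pt :=
  let j := (n / 2)%Z in
  if Z.eqb (n mod 2) 0 then (IZR j + th, Pinf (IZR j + th))
  else (IZR j + 1 - th, - Pinf (IZR j + 1 - th)).

Lemma div2_facts n : (n = 2 * (n / 2) + n mod 2 /\ 0 <= n mod 2 < 2)%Z.
Proof. split. apply Z.div_mod. lia. apply Z.mod_pos_bound. lia. Qed.

Definition validinf (n : Z) := True.

Lemma inf_HC1 n th : validinf n -> 0 < th < 1 -> Iinf n (pathinf n th).
Proof.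
  intros _ Hth. unfold pathinf, Iinf. destruct (div2_facts n) as [E B].
  exists (n / 2)%Z. destruct (Z.eqb_spec (n mod 2) 0) as [H0|H0]; cbn beta iota zeta;
  set (q := (n / 2)%Z) in *; set (r := (n mod 2)%Z) in *; clearbody q r.
  - left. split. lia. simpl. split. lra. reflexivity.
  - right. split. lia. simpl. split. lra. reflexivity.
Qed.

Lemma inf_HC2 n : validinf n -> TTpt Psetinf (pathinf n 0) /\ TTpt Psetinf (pathinf n 1).
Proof.
  intros _. unfold pathinf, TTpt, Psetinf.
  destruct (Z.eqb (n mod 2) 0); split.
  - exists (IZR (n/2)). split. eexists; eauto. rewrite Rplus_0_r, Pinf_int. reflexivity.
  - exists (IZR (n/2 + 1)). split. eexists; eauto. rewrite <- (Pinf_int (n/2+1)). rewrite plus_IZR. reflexivity.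
  - exists (IZR (n/2 + 1)). split. eexists; eauto. rewrite Rminus_0_r, <- plus_IZR, Pinf_int, Ropp_0. reflexivity.
  - exists (IZR (n/2)). split. eexists; eauto.
    replace (IZR (n / 2) + 1 - 1) with (IZR (n/2)) by ring. rewrite Pinf_int, Ropp_0. reflexivity.
Qed.

Lemma inf_HC3 n z : Iinf n z -> ~ TTpt Psetinf z.
Proof.
  intros [j Hj] [x [[l ->] ->]]. simpl in Hj.
  destruct Hj as [[_ [H _]]|[_ [H _]]];
  destruct H as [H1 H2]; apply lt_IZR in H1; apply IZR_lt_succ in H2; lia.
Qed.

Lemma inf_HC4 n m z : Iinf n z -> Iinf m z -> n = m.
Proof.
  intros [j Hj] [j' Hj'].
  assert (Ej : j = j').
  { destruct Hj as [[_ [H _]]|[_ [H _]]]; destruct Hj' as [[_ [H' _]]|[_ [H' _]]];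
    assert (IZR j < IZR j' + 1) by lra; assert (IZR j' < IZR j + 1) by lra;
    apply IZR_lt_succ in H0; apply IZR_lt_succ in H1; lia. }
  subst j'.
  destruct Hj as [[E1 [H1 Y1]]|[E1 [H1 Y1]]]; destruct Hj' as [[E2 [H2 Y2]]|[E2 [H2 Y2]]]; try lia;
  pose proof (Pinf_pos j (fst z) H1); lra.
Qed.

Lemma inf_HLT z : TTpt Psetinf z -> Laminf z.
Proof.
  intros [x [[l ->] ->]]. unfold Laminf. simpl. left. rewrite Pinf_int. reflexivity.
Qed.

Lemma divmod2 q r : (0 <= r < 2)%Z -> ((2 * q + r) / 2 = q /\ (2 * q + r) mod 2 = r)%Z.
Proof.
  intros H. split.
  - symmetry. apply (Z.div_unique _ _ _ r); auto.
  - symmetry. apply (Z.mod_unique _ _ q); auto.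
Qed.

Lemma path_even l th : pathinf (2 * l + 0) th = (IZR l + th, Pinf (IZR l + th)).
Proof.
  unfold pathinf. destruct (divmod2 l 0 ltac:(lia)) as [E1 E2]. rewrite E1, E2. reflexivity.
Qed.

Lemma path_odd l th : pathinf (2 * l + 1) th = (IZR l + 1 - th, - Pinf (IZR l + 1 - th)).
Proof.
  unfold pathinf. destruct (divmod2 l 1 ltac:(lia)) as [E1 E2]. rewrite E1, E2. reflexivity.
Qed.

Lemma Omega_unpack X Y Lam g : Omega X Y Lam g ->
  gcont g /\ (exists tt, tt_ok tt /\ forall i, local_traj X Y g (tt i) (tt (i + 1)%Z)) /\ Lam (g 0).
Proof.
  intros [[Hc [tt [H1 [H2 [H3 H4]]]]] HL]. split; [|split]; auto.
  exists tt. split; auto. split; auto.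
Qed.

Lemma inf_HA g : Omega Xinf Yinf Laminf g -> forall t0, TTpt Psetinf (g t0) ->
  exists n, validinf n /\ forall th, 0 <= th <= 1 -> g (t0 + th) = pathinf n th.
Proof.
  intros Hg t0 HT. destruct (Omega_unpack _ _ _ _ Hg) as [Hc [[tt [Htt H4]] HL]].
  change (forall i, local_traj (Xf Dinf) (Yf Dinf) g (tt i) (tt (i + 1)%Z)) in H4.
  destruct HT as [x [[l ->] Hgt]].
  destruct (piece_at Dinf g tt Htt H4 t0) as [i0 [Hi0 [HX|HY]]].
  - exists (2 * l + 0)%Z. split. exact I. intros th Hth.
    rewrite path_even.
    apply (fwdR Pinf Dinf Pinf_deriv g tt Hc Htt H4 t0 i0 Hi0 HX (IZR l) 1); auto.
    rewrite Hgt, Pinf_int. reflexivity.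
    intros s Hs. apply (Pinf_pos l). lra.
  - exists (2 * (l - 1) + 1)%Z. split. exact I. intros th Hth.
    rewrite path_odd. rewrite minus_IZR.
    replace (IZR l - IZR 1 + 1 - th) with (IZR l - th) by ring.
    apply (fwdL Pinf Dinf Pinf_deriv g tt Hc Htt H4 t0 i0 Hi0 HY (IZR l) 1); auto.
    rewrite Hgt, Pinf_int, Ropp_0. reflexivity.
    intros s Hs. apply (Pinf_pos (l - 1)). rewrite minus_IZR. lra.
Qed.

Lemma inf_HB g : Omega Xinf Yinf Laminf g -> forall T0, exists t, T0 <= t <= T0 + 1 /\ TTpt Psetinf (g t).
Proof.
  intros Hg T0. destruct (Omega_unpack _ _ _ _ Hg) as [Hc [[tt [Htt H4]] HL]].
  change (forall i, local_traj (Xf Dinf) (Yf Dinf) g (tt i) (tt (i + 1)%Z)) in H4.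
  assert (HL0 : Lm Pinf (g 0)) by (split; [apply Pinf_nonneg| exact HL]).
  destruct (Lm_all Pinf Dinf Pinf_deriv g tt Hc Htt H4 HL0 T0) as [_ Hv].
  set (u := fst (g T0)) in *. set (v := snd (g T0)) in *.
  assert (Eg : g T0 = (u, v)) by apply surjective_pairing.
  set (j := fl u). destruct (fl_spec u) as [Hj1 Hj2]. fold j in Hj1, Hj2.
  destruct (Req_dec u (IZR j)) as [Eu|Nu].
  - exists T0. split. lra. exists (IZR j). split. exists j; auto.
    rewrite Eg, Eu. f_equal. rewrite Eu, Pinf_int in Hv. lra.
  - assert (Hp : 0 < Pinf u) by (apply (Pinf_pos j); lra).
    destruct (piece_at Dinf g tt Htt H4 T0) as [i0 [Hi0 [HX|HY]]].
    + assert (v = Pinf u).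
      { destruct HX as [HX _]. assert (0 <= v) by (apply HX; lra). lra. }
      exists (T0 + (IZR j + 1 - u)). split. lra. exists (IZR (j + 1)). split. exists (j+1)%Z; auto.
      rewrite (fwdR Pinf Dinf Pinf_deriv g tt Hc Htt H4 T0 i0 Hi0 HX u (IZR j + 1 - u)).
      rewrite plus_IZR. replace (u + (IZR j + 1 - u)) with (IZR j + 1) by ring.
      rewrite <- plus_IZR, Pinf_int. reflexivity.
      rewrite Eg. congruence.
      intros s Hs. apply (Pinf_pos j). lra. lra.
    + assert (v = - Pinf u).
      { destruct HY as [HY _]. assert (v <= 0) by (apply HY; lra). lra. }
      exists (T0 + (u - IZR j)). split. lra. exists (IZR j). split. exists j; auto.
      rewrite (fwdL Pinf Dinf Pinf_deriv g tt Hc Htt H4 T0 i0 Hi0 HY u (u - IZR j)).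
      replace (u - (u - IZR j)) with (IZR j) by ring.
      rewrite Pinf_int, Ropp_0. reflexivity.
      rewrite Eg. congruence.
      intros s Hs. apply (Pinf_pos j). lra. lra.
Qed.

Lemma n_cases n : exists q, n = (2 * q + 0)%Z \/ n = (2 * q + 1)%Z.
Proof. destruct (div2_facts n) as [E B]. exists (n / 2)%Z. lia. Qed.

Lemma Pinf_abs x : Rabs (Pinf x) <= 2 / PI.
Proof. rewrite Rabs_pos_eq by apply Pinf_nonneg. apply Pinf_le. Qed.

Lemma cset_gen n q : n = (2 * q + 0)%Z \/ n = (2 * q + 1)%Z ->
  (forall z, Cset pathinf n z -> IZR q <= fst z <= IZR q + 1 /\ Rabs (snd z) <= 2 / PI) /\
  Cset pathinf n (IZR q, 0) /\ Cset pathinf n (IZR q + 1, 0).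
Proof.
  intros [->| ->]; split; [|split| |split].
  - intros z [th [Hth ->]]. rewrite path_even. simpl. split. lra. apply Pinf_abs.
  - exists 0. split. lra. rewrite path_even. rewrite Rplus_0_r, Pinf_int. reflexivity.
  - exists 1. split. lra. rewrite path_even. rewrite <- (Pinf_int (q + 1)), plus_IZR. reflexivity.
  - intros z [th [Hth ->]]. rewrite path_odd. simpl. split. lra. rewrite Rabs_Ropp. apply Pinf_abs.
  - exists 1. split. lra. rewrite path_odd.
    replace (IZR q + 1 - 1) with (IZR q) by ring. rewrite Pinf_int, Ropp_0. reflexivity.
  - exists 0. split. lra. rewrite path_odd.
    rewrite Rminus_0_r. replace (IZR q + 1) with (IZR (q + 1)) by (rewrite plus_IZR; ring). rewrite Pinf_int, Ropp_0. reflexivity.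
Qed.

Lemma cset_even q z : Cset pathinf (2 * q + 0) z -> snd z = Pinf (fst z).
Proof. intros [th [Hth ->]]. rewrite path_even. reflexivity. Qed.

Lemma cset_odd q z : Cset pathinf (2 * q + 1) z -> snd z = - Pinf (fst z).
Proof. intros [th [Hth ->]]. rewrite path_odd. reflexivity. Qed.

Lemma mid_even q : Cset pathinf (2 * q + 0) (IZR q + /2, 2 / PI).
Proof. exists (/2). split. lra. rewrite path_even, Pinf_half. reflexivity. Qed.

Lemma mid_odd q : Cset pathinf (2 * q + 1) (IZR q + /2, - (2 / PI)).
Proof.
  exists (/2). split. lra. rewrite path_odd.
  replace (IZR q + 1 - /2) with (IZR q + /2) by field. rewrite Pinf_half. reflexivity.
Qed.

Lemma PI_ge2 : 2 <= PI.
Proof. pose proof PI2_1. lra. Qed.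

Lemma inf_bounds n m :
  (1/3) * IZR (Z.abs (n - m)) <= hdist (Cset pathinf n) (Cset pathinf m) <=
  (2 + 4 / PI) * IZR (Z.abs (n - m)).
Proof.
  pose proof PI_pos as Hpi. pose proof PI_4 as Hpi4. pose proof PI_ge2 as Hpi2.
  assert (H4pi : 0 < 4 / PI) by (apply Rdiv_lt_0_compat; lra).
  assert (H2pi : 1/2 <= 2 / PI).
  { apply (Rmult_le_reg_r PI); auto. replace (2 / PI * PI) with 2 by (field; lra). lra. }
  destruct (Z.eq_dec n m) as [<-|Hne].
  { rewrite hdist_refl. rewrite Z.sub_diag. simpl. lra. }
  assert (HK : 1 <= IZR (Z.abs (n - m))) by (apply IZR_le; lia).
  destruct (n_cases n) as [q Hn]. destruct (n_cases m) as [q' Hm].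
  destruct (cset_gen n q Hn) as [Fn [Ln Rn]]. destruct (cset_gen m q' Hm) as [Fm [Lm' Rm]].
  assert (Hqq1 : IZR q - IZR q' <= IZR (Z.abs (n - m))) by (apply IZR_sub_le; lia).
  assert (Hqq2 : IZR q' - IZR q <= IZR (Z.abs (n - m))) by (apply IZR_sub_le; lia).
  assert (HM : forall a b, Cset pathinf n a -> Cset pathinf m b ->
     edist a b <= IZR (Z.abs (n - m)) + 1 + 4 / PI).
  { intros a b Ha Hb. destruct (Fn a Ha) as [Ha1 Ha2]. destruct (Fm b Hb) as [Hb1 Hb2].
    eapply Rle_trans. apply edist_le.
    assert (Rabs (fst a - fst b) <= IZR (Z.abs (n - m)) + 1) by (apply Rabs_le; lra).
    assert (Rabs (snd a - snd b) <= 4 / PI).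
    { unfold Rminus. eapply Rle_trans. apply Rabs_triang. rewrite Rabs_Ropp.
      replace (4 / PI) with (2 / PI + 2 / PI) by (field; lra). lra. }
    lra. }
  split.
  - destruct (Z.lt_total q q') as [Hlt|[Heq|Hgt]].
    + apply (hdist_ge _ _ (IZR q, 0) (IZR q', 0) _ (IZR (Z.abs (n - m)) + 1 + 4 / PI)); auto.
      intros b Hb. destruct (Fm b Hb) as [Hb1 _].
      eapply Rle_trans. 2: apply edist_fst. simpl.
      assert (IZR (Z.abs (n - m)) <= 3 * (IZR q' - IZR q)).
      { rewrite <- minus_IZR, <- mult_IZR. apply IZR_le. lia. }
      rewrite Rabs_left1; lra.
    + subst q'. destruct Hn as [Hn|Hn]; destruct Hm as [Hm|Hm]; try lia.
      * apply (hdist_ge _ _ (IZR q + /2, 2 / PI) (IZR q, 0) _ (IZR (Z.abs (n - m)) + 1 + 4 / PI)); auto.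
        rewrite Hn. apply mid_even.
        intros b Hb. rewrite Hm in Hb. assert (E := cset_odd _ _ Hb).
        pose proof (Pinf_nonneg (fst b)).
        eapply Rle_trans. 2: apply edist_snd. simpl. rewrite Rabs_pos_eq by lra.
        replace (Z.abs (n - m)) with 1%Z by lia. simpl. lra.
      * apply (hdist_ge _ _ (IZR q + /2, - (2 / PI)) (IZR q, 0) _ (IZR (Z.abs (n - m)) + 1 + 4 / PI)); auto.
        rewrite Hn. apply mid_odd.
        intros b Hb. rewrite Hm in Hb. assert (E := cset_even _ _ Hb).
        pose proof (Pinf_nonneg (fst b)).
        eapply Rle_trans. 2: apply edist_snd. simpl. rewrite Rabs_left1 by lra.
        replace (Z.abs (n - m)) with 1%Z by lia. simpl. lra.
    + apply (hdist_ge _ _ (IZR q + 1, 0) (IZR q', 0) _ (IZR (Z.abs (n - m)) + 1 + 4 / PI)); auto.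
      intros b Hb. destruct (Fm b Hb) as [Hb1 _].
      eapply Rle_trans. 2: apply edist_fst. simpl.
      assert (IZR (Z.abs (n - m)) <= 3 * (IZR q - IZR q')).
      { rewrite <- minus_IZR, <- mult_IZR. apply IZR_le. lia. }
      rewrite Rabs_pos_eq; lra.
  - eapply Rle_trans. apply (hdist_le _ _ (IZR (Z.abs (n - m)) + 1 + 4 / PI)).
    lra.
    intros a Ha. exists (IZR q', 0). split; auto.
    intros b Hb. exists (IZR q, 0). split; auto. rewrite edist_sym. apply HM; auto.
    assert (4 / PI <= 4 / PI * IZR (Z.abs (n - m))).
    { rewrite <- (Rmult_1_r (4 / PI)) at 1. apply Rmult_le_compat_l; lra. }
    lra.
Qed.

Lemma inf_adj n m : pathinf n 1 = pathinf m 0 -> (Z.abs (m - n) <= 2)%Z.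
Proof.
  intros E. apply (f_equal fst) in E.
  destruct (n_cases n) as [q [-> | ->]]; destruct (n_cases m) as [q' [-> | ->]];
  rewrite ?path_even, ?path_odd in E; simpl in E.
  - assert (IZR (q + 1) = IZR q') by (rewrite plus_IZR; lra). apply eq_IZR in H. lia.
  - assert (IZR (q + 1) = IZR (q' + 1)) by (rewrite !plus_IZR; lra). apply eq_IZR in H. lia.
  - assert (IZR q = IZR q') by lra. apply eq_IZR in H. lia.
  - assert (IZR q = IZR (q' + 1)) by (rewrite !plus_IZR; lra). apply eq_IZR in H. lia.
Qed.

Definition inf_struct_ex := struct_ex Xinf Yinf Laminf Iinf Psetinf validinf pathinf
  inf_HA inf_HB inf_HC1 inf_HC2 inf_HC3.
Definition inf_itin_val := itin_val Iinf Psetinf validinf pathinf inf_HC1 inf_HC2 inf_HC3 inf_HC4.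

Lemma inf_target g : Omega Xinf Yinf Laminf g -> Thetainf (itin Iinf Psetinf g).
Proof.
  intros Hg. destruct (inf_struct_ex g Hg) as [tau [a Hs]].
  intros j. rewrite !(inf_itin_val g tau a Hs).
  destruct Hs as [_ Hs]. destruct (Hs j) as [_ H1]. destruct (Hs (j+1)%Z) as [_ H2].
  apply inf_adj. rewrite <- H1 by lra. rewrite <- H2 by lra. apply geq. rewrite plus_IZR. ring.
Qed.

Lemma theta_lin (s : Z -> Z) : Thetainf s -> forall j, (Z.abs (s j - s 0%Z) <= 2 * Z.abs j)%Z.
Proof.
  intros Hs.
  assert (forall n : nat, (Z.abs (s (Z.of_nat n) - s 0%Z) <= 2 * Z.of_nat n)%Z /\
                          (Z.abs (s (- Z.of_nat n)%Z - s 0%Z) <= 2 * Z.of_nat n)%Z).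
  { induction n.
    - simpl. rewrite Z.sub_diag. simpl. lia.
    - destruct IHn as [A B]. split.
      + pose proof (Hs (Z.of_nat n)). replace (Z.of_nat n + 1)%Z with (Z.of_nat (S n)) in H by lia. lia.
      + pose proof (Hs (- Z.of_nat (S n))%Z). replace (- Z.of_nat (S n) + 1)%Z with (- Z.of_nat n)%Z in H by lia. lia. }
  intros j. destruct (Z_le_gt_dec 0 j).
  - destruct (H (Z.to_nat j)) as [A _]. replace (Z.of_nat (Z.to_nat j)) with j in A by lia. lia.
  - destruct (H (Z.to_nat (- j))) as [_ A]. replace (- Z.of_nat (Z.to_nat (- j)))%Z with j in A by lia. lia.
Qed.

Lemma inf_summable g1 g2 : Omega Xinf Yinf Laminf g1 -> Omega Xinf Yinf Laminf g2 ->
  ex_series (zfold (fun j => IZR (Z.abs (itin Iinf Psetinf g1 j - itin Iinf Psetinf g2 j)) * (/ 2) ^ (Z.abs_nat j))).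
Proof.
  intros H1 H2.
  set (s1 := itin Iinf Psetinf g1). set (s2 := itin Iinf Psetinf g2).
  pose proof (theta_lin s1 (inf_target g1 H1)) as T1.
  pose proof (theta_lin s2 (inf_target g2 H2)) as T2.
  apply (ex_dseq_lin _ (IZR (Z.abs (s1 0%Z - s2 0%Z))) 4).
  apply IZR_le; lia. lra.
  intros j. split. apply IZR_le; lia.
  rewrite INR_IZR_INZ, Nat2Z.inj_abs_nat.
  replace 4 with (IZR 4) by reflexivity. rewrite <- mult_IZR, <- plus_IZR. apply IZR_le.
  specialize (T1 j). specialize (T2 j). lia.
Qed.

Theorem inf_homeo : itinerary_homeo Xinf Yinf Laminf Iinf Psetinf Thetainf.
Proof.
  apply (homeo_generic Xinf Yinf Laminf Iinf Psetinf validinf pathinf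
    inf_HA inf_HB inf_HC1 inf_HC2 inf_HC3 inf_HC4 inf_HLT Thetainf (1/3) (2 + 4 / PI)).
  lra.
  pose proof PI_pos. assert (0 < 4 / PI) by (apply Rdiv_lt_0_compat; lra). lra.
  intros n m _ _. apply inf_bounds.
  apply inf_summable.
  apply inf_target.
Qed.

Section Prod.
Variable f : nat -> R.
Lemma prod_nonneg l : (forall i, In i l -> 0 <= f i) -> 0 <= fold_right Rmult 1 (map f l).
Proof.
  induction l; intros H; simpl. lra.
  apply Rmult_le_pos. apply H; simpl; auto. apply IHl. intros; apply H; simpl; auto.
Qed.
Lemma prod_pos l : (forall i, In i l -> 0 < f i) -> 0 < fold_right Rmult 1 (map f l).
Proof.
  induction l; intros H; simpl. lra.
  apply Rmult_lt_0_compat. apply H; simpl; auto. apply IHl. intros; apply H; simpl; auto.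
Qed.
Lemma prod_zero l i : In i l -> f i = 0 -> fold_right Rmult 1 (map f l) = 0.
Proof.
  induction l; intros H Hf; simpl in *. contradiction.
  destruct H as [->|H]. rewrite Hf. ring. rewrite IHl; auto. ring.
Qed.
Lemma prod_ge l c : 0 <= c -> (forall i, In i l -> c <= f i) -> c ^ length l <= fold_right Rmult 1 (map f l).
Proof.
  intros Hc. induction l; intros H; simpl. lra.
  apply Rmult_le_compat; auto. apply pow_le; auto. apply H; simpl; auto.
  apply IHl. intros; apply H; simpl; auto.
Qed.
Lemma prod_le l C : (forall i, In i l -> 0 <= f i <= C) -> fold_right Rmult 1 (map f l) <= C ^ length l.
Proof.
  induction l; intros H; simpl. lra.
  apply Rmult_le_compat. apply H; simpl; auto. apply prod_nonneg. intros; apply H; simpl; auto.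
  apply H; simpl; auto. apply IHl. intros; apply H; simpl; auto.
Qed.
End Prod.

Lemma prod_ex_derive (h : nat -> R) l x :
  ex_derive (fun y => fold_right Rmult 1 (map (fun i => (y - h i) ^ 2) l)) x.
Proof.
  induction l; simpl.
  - apply ex_derive_const.
  - apply (ex_derive_mult (fun y => (y - h a) ^ 2) (fun y => fold_right Rmult 1 (map (fun i => (y - h i) ^ 2) l))); auto.
    auto_derive. auto.
Qed.

Section Fin.
Variable k : nat.
Hypothesis Hk : (2 <= k)%nat.

Let K := Z.of_nat k.
Let a := r1k k.
Definition Qk (x : R) := fold_right Rmult 1 (map (fun i => (x - (INR i - INR k / 2)) ^ 2) (seq 1 (k - 1))).

Lemma INR_K : IZR K = INR k.
Proof. unfold K. rewrite <- INR_IZR_INZ. reflexivity. Qed.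

Lemma k_ge2 : 2 <= INR k.
Proof. replace 2 with (INR 2) by (simpl; ring). apply le_INR. auto. Qed.

Lemma Pk_eq x : Pk k x = (a ^ 2 - x ^ 2) * Qk x.
Proof. unfold Pk, Qk, a, r1k. ring. Qed.

Lemma r0_eq : r0k k = - a.
Proof. unfold r0k, a, r1k. field. Qed.

Lemma pk_1 : pk k 1 = - a + /2.
Proof. unfold pk, a, r1k. simpl. field. Qed.

Lemma pk_Km1 : pk k (K - 1) = a - /2.
Proof. unfold pk, a, r1k. rewrite minus_IZR, INR_K. simpl. field. Qed.

Lemma pk_succ j : pk k (j + 1) = pk k j + 1.
Proof. unfold pk. rewrite plus_IZR. simpl. ring. Qed.

Lemma pk_lt i j : pk k i < pk k j -> (i < j)%Z.
Proof. unfold pk. intros H. apply lt_IZR. lra. Qed.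

Lemma pk_le i j : (i <= j)%Z -> pk k i <= pk k j.
Proof. unfold pk. intros H. apply IZR_le in H. lra. Qed.

Lemma pk_ltZ i j : (i < j)%Z -> pk k i < pk k j.
Proof. unfold pk. intros H. apply IZR_lt in H. lra. Qed.

Lemma pk_diff i j : pk k j - pk k i = IZR (j - i).
Proof. unfold pk. rewrite minus_IZR. ring. Qed.

Lemma in_seq1 i : In i (seq 1 (k - 1)) -> (1 <= Z.of_nat i <= K - 1)%Z.
Proof. intros H. apply in_seq in H. unfold K. lia. Qed.

Lemma pk_nat i : INR i - INR k / 2 = pk k (Z.of_nat i).
Proof. unfold pk. rewrite <- INR_IZR_INZ. reflexivity. Qed.

Lemma Q_nonneg x : 0 <= Qk x.
Proof. apply prod_nonneg. intros. apply pow2_ge_0. Qed.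

Lemma Q_pos x : (forall l, (1 <= l <= K - 1)%Z -> x <> pk k l) -> 0 < Qk x.
Proof.
  intros H. apply prod_pos. intros i Hi. rewrite pk_nat.
  assert (x - pk k (Z.of_nat i) <> 0) by (intro E; apply (H (Z.of_nat i)); [apply in_seq1; auto|lra]).
  apply pow2_gt_0. auto.
Qed.

Lemma Q_zero l : (1 <= l <= K - 1)%Z -> Qk (pk k l) = 0.
Proof.
  intros Hl. apply (prod_zero _ _ (Z.to_nat l)).
  apply in_seq. unfold K in Hl. lia.
  rewrite pk_nat. rewrite Z2Nat.id by lia. ring.
Qed.

Lemma Q_ge x : (forall l, (1 <= l <= K - 1)%Z -> /2 <= Rabs (x - pk k l)) -> (/4) ^ (k - 1) <= Qk x.
Proof.
  intros H. unfold Qk.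
  assert (HH := prod_ge (fun i => (x - (INR i - INR k / 2)) ^ 2) (seq 1 (k - 1)) (/4)).
  rewrite length_seq in HH. apply HH. lra.
  intros i Hi. rewrite pk_nat. assert (A := H _ (in_seq1 i Hi)).
  rewrite <- Rsqr_pow2. rewrite Rsqr_abs. replace (/4) with (Rsqr (/2)) by (unfold Rsqr; field).
  apply Rsqr_incr_1; auto. lra. apply Rabs_pos.
Qed.

Lemma Q_le x : - a <= x <= a -> Qk x <= (INR k ^ 2) ^ (k - 1).
Proof.
  intros Hx. unfold Qk.
  assert (HH := prod_le (fun i => (x - (INR i - INR k / 2)) ^ 2) (seq 1 (k - 1)) (INR k ^ 2)).
  rewrite length_seq in HH. apply HH.
  intros i Hi. rewrite pk_nat. split. apply pow2_ge_0.
  pose proof (in_seq1 i Hi) as [H1 H2]. apply IZR_le in H1. apply IZR_le in H2.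
  rewrite minus_IZR, INR_K in H2. unfold pk. unfold a, r1k in Hx.
  pose proof k_ge2. nra.
Qed.

Definition Bdk := a ^ 2 * (INR k ^ 2) ^ (k - 1).

Lemma a_pos : /2 <= a.
Proof. unfold a, r1k. pose proof k_ge2. lra. Qed.

Lemma tang_range l : (1 <= l <= K - 1)%Z -> - a + /2 <= pk k l <= a - /2.
Proof.
  intros Hl. rewrite <- pk_1, <- pk_Km1. split; apply pk_le; lia.
Qed.

Lemma P_nonneg x : - a <= x <= a -> 0 <= Pk k x.
Proof. intros H. rewrite Pk_eq. apply Rmult_le_pos. nra. apply Q_nonneg. Qed.

Lemma P_neg x : x < - a \/ a < x -> Pk k x < 0.
Proof.
  intros H. rewrite Pk_eq. assert (Hq : 0 < Qk x).
  { apply Q_pos. intros l Hl E. pose proof (tang_range l Hl). lra. }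
  pose proof a_pos.
  assert (a ^ 2 - x ^ 2 < 0) by nra. nra.
Qed.

Lemma P_nonneg_iff x : 0 <= Pk k x <-> r0k k <= x <= r1k k.
Proof.
  rewrite r0_eq. fold a. split.
  - intros H. destruct (Rle_lt_dec (-a) x) as [H1|H1]; destruct (Rle_lt_dec x a) as [H2|H2];
    try (split; auto; fail).
    + pose proof (P_neg x (or_intror H2)); lra.
    + pose proof (P_neg x (or_introl H1)); lra.
    + pose proof (P_neg x (or_introl H1)); lra.
  - apply P_nonneg.
Qed.

Lemma P_pos x : - a < x < a -> (forall l, (1 <= l <= K - 1)%Z -> x <> pk k l) -> 0 < Pk k x.
Proof.
  intros H1 H2. rewrite Pk_eq. apply Rmult_lt_0_compat. nra. apply Q_pos; auto.
Qed.

Lemma P_tang l : (1 <= l <= K - 1)%Z -> Pk k (pk k l) = 0.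
Proof. intros Hl. rewrite Pk_eq, Q_zero; auto. ring. Qed.

Lemma P_r1 : Pk k a = 0.
Proof. rewrite Pk_eq. ring. Qed.

Lemma P_r0 : Pk k (- a) = 0.
Proof. rewrite Pk_eq. ring. Qed.

Lemma P_le x : - a <= x <= a -> Pk k x <= Bdk.
Proof.
  intros Hx. rewrite Pk_eq. unfold Bdk. apply Rmult_le_compat. nra. apply Q_nonneg. nra.
  apply Q_le; auto.
Qed.

Lemma P_mid j : (1 <= j <= K - 2)%Z -> (/4) ^ (k - 1) <= Pk k (pk k j + /2).
Proof.
  intros Hj. rewrite Pk_eq.
  assert (H1 : 1 <= a ^ 2 - (pk k j + /2) ^ 2).
  { unfold pk, a, r1k. destruct Hj as [Hj1 Hj']. apply IZR_le in Hj1. apply IZR_le in Hj'.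
    rewrite minus_IZR, INR_K in Hj'. simpl in *. nra. }
  assert (H2 : (/4) ^ (k - 1) <= Qk (pk k j + /2)).
  { apply Q_ge. intros l Hl. rewrite <- Rabs_Ropp.
    replace (- (pk k j + / 2 - pk k l)) with (IZR (l - j) - /2) by (rewrite <- pk_diff; ring).
    destruct (Z_le_gt_dec (l - j) 0).
    + apply IZR_le in l0. rewrite Rabs_left1; lra.
    + assert (IZR 1 <= IZR (l - j)) by (apply IZR_le; lia). rewrite Rabs_pos_eq; simpl in *; lra. }
  assert (0 <= (/4) ^ (k - 1)) by (apply pow_le; lra).
  replace ((/4) ^ (k-1)) with (1 * (/4) ^ (k-1)) by ring.
  apply Rmult_le_compat; lra.
Qed.

Lemma P_deriv x : is_derive (Pk k) x (Derive (Pk k) x).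
Proof.
  apply Derive_correct. unfold Pk.
  apply (ex_derive_mult (fun x => - (x + (INR k - 1) / 2) * (x - (INR k - 1) / 2))
    (fun x => fold_right Rmult 1 (map (fun i => (x - (INR i - INR k / 2)) ^ 2) (seq 1 (k - 1))))).
  auto_derive; auto.
  apply (prod_ex_derive (fun i => INR i - INR k / 2)).
Qed.


Definition pathk (n : Z) (th : R) : pt :=
  if Z.eqb n 0 then
    (if Rle_dec th (/2) then (pk k 1 - th, - Pk k (pk k 1 - th))
     else (pk k 1 - 1 + th, Pk k (pk k 1 - 1 + th)))
  else if Z.eqb n (2 * K - 3) then
    (if Rle_dec th (/2) then (pk k (K - 1) + th, Pk k (pk k (K - 1) + th))
     else (pk k (K - 1) + 1 - th, - Pk k (pk k (K - 1) + 1 - th)))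
  else if Z.eqb (n mod 2) 0 then (pk k (n / 2 + 1) - th, - Pk k (pk k (n / 2 + 1) - th))
  else (pk k (n / 2 + 1) + th, Pk k (pk k (n / 2 + 1) + th)).

Definition validk (n : Z) := (0 <= n <= 2 * K - 3)%Z.

Lemma K_ge2 : (2 <= K)%Z.
Proof. unfold K. lia. Qed.

Lemma path_up j th : (1 <= j <= K - 2)%Z -> pathk (2 * j - 1) th = (pk k j + th, Pk k (pk k j + th)).
Proof.
  intros Hj. unfold pathk.
  replace (2 * j - 1)%Z with (2 * (j - 1) + 1)%Z by lia.
  destruct (divmod2 (j - 1) 1 ltac:(lia)) as [E1 E2]. rewrite E1, E2.
  destruct (Z.eqb_spec (2 * (j - 1) + 1) 0); [lia|].
  destruct (Z.eqb_spec (2 * (j - 1) + 1) (2 * K - 3)); [lia|].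
  simpl. replace (j - 1 + 1)%Z with j by lia. reflexivity.
Qed.

Lemma path_dn j th : (1 <= j <= K - 2)%Z -> pathk (2 * j) th = (pk k (j + 1) - th, - Pk k (pk k (j + 1) - th)).
Proof.
  intros Hj. unfold pathk.
  replace (2 * j)%Z with (2 * j + 0)%Z by lia.
  destruct (divmod2 j 0 ltac:(lia)) as [E1 E2]. rewrite E1, E2.
  destruct (Z.eqb_spec (2 * j + 0) 0); [lia|].
  destruct (Z.eqb_spec (2 * j + 0) (2 * K - 3)); [lia|].
  simpl. reflexivity.
Qed.

Lemma path0_lo th : th <= /2 -> pathk 0 th = (pk k 1 - th, - Pk k (pk k 1 - th)).
Proof. intros H. unfold pathk. simpl. destruct (Rle_dec th (/2)); [reflexivity|lra]. Qed.

Lemma path0_hi th : /2 <= th -> pathk 0 th = (pk k 1 - 1 + th, Pk k (pk k 1 - 1 + th)).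
Proof.
  intros H. unfold pathk. simpl. destruct (Rle_dec th (/2)); [|reflexivity].
  assert (th = /2) by lra. subst th. rewrite pk_1.
  replace (- a + / 2 - / 2) with (- a) by lra. replace (- a + / 2 - 1 + / 2) with (- a) by lra.
  rewrite P_r0. f_equal. ring.
Qed.

Lemma pathL_lo th : th <= /2 -> pathk (2 * K - 3) th = (pk k (K - 1) + th, Pk k (pk k (K - 1) + th)).
Proof.
  intros H. pose proof K_ge2. unfold pathk.
  destruct (Z.eqb_spec (2 * K - 3) 0); [lia|]. rewrite Z.eqb_refl.
  destruct (Rle_dec th (/2)); [reflexivity|lra].
Qed.

Lemma pathL_hi th : /2 <= th -> pathk (2 * K - 3) th = (pk k (K - 1) + 1 - th, - Pk k (pk k (K - 1) + 1 - th)).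
Proof.
  intros H. pose proof K_ge2. unfold pathk.
  destruct (Z.eqb_spec (2 * K - 3) 0); [lia|]. rewrite Z.eqb_refl.
  destruct (Rle_dec th (/2)); [|reflexivity].
  assert (th = /2) by lra. subst th. rewrite pk_Km1.
  replace (a - / 2 + / 2) with a by lra. replace (a - / 2 + 1 - / 2) with a by lra.
  rewrite P_r1. f_equal. ring.
Qed.

Lemma valid_cases n : validk n ->
  n = 0%Z \/ n = (2 * K - 3)%Z \/ (exists j, (1 <= j <= K - 2)%Z /\ n = (2 * j - 1)%Z)
  \/ (exists j, (1 <= j <= K - 2)%Z /\ n = (2 * j)%Z).
Proof.
  intros Hn. unfold validk in Hn.
  destruct (Z.eq_dec n 0); auto. right. destruct (Z.eq_dec n (2 * K - 3)); auto. right.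
  destruct (n_cases n) as [q [E|E]].
  - right. exists q. lia.
  - left. exists (q + 1)%Z. lia.
Qed.

Lemma tangP l : (1 <= l <= K - 1)%Z -> TTpt (Psetk k) (pk k l, 0).
Proof. intros Hl. exists (pk k l). split; auto. exists l. split; auto. Qed.

Lemma tangP' l y : (1 <= l <= K - 1)%Z -> y = Pk k (pk k l) \/ y = - Pk k (pk k l) -> TTpt (Psetk k) (pk k l, y).
Proof.
  intros Hl Hy. rewrite P_tang in Hy by auto. replace y with 0 by lra. apply tangP; auto.
Qed.

Lemma fin_HC1 n th : validk n -> 0 < th < 1 -> Ik k n (pathk n th).
Proof.
  intros Hn Hth. pose proof K_ge2. pose proof a_pos. fold K.
  destruct (valid_cases n Hn) as [->|[->|[[j [Hj ->]]|[j [Hj ->]]]]]; unfold Ik; fold K; fold a.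
  - left. split; auto. rewrite r0_eq. fold a. rewrite pk_1.
    destruct (Rle_dec th (/2)).
    + rewrite path0_lo by auto. simpl. rewrite pk_1. split. lra. right; reflexivity.
    + rewrite path0_hi by lra. simpl. rewrite pk_1. split. lra. left; reflexivity.
  - right; left. split; auto. unfold r1k. fold (r1k k). fold a. rewrite pk_Km1.
    destruct (Rle_dec th (/2)).
    + rewrite pathL_lo by auto. simpl. rewrite pk_Km1. split. lra. left; reflexivity.
    + rewrite pathL_hi by lra. simpl. rewrite pk_Km1. split. lra. right; reflexivity.
  - right; right; left. exists j. split; auto. split; auto. rewrite path_up by auto. simpl.
    rewrite pk_succ. split. lra. reflexivity.
  - right; right; right. exists j. split; auto. split; auto. rewrite path_dn by auto. simpl.
    rewrite pk_succ. split. lra. reflexivity.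
Qed.

Lemma fin_HC2 n : validk n -> TTpt (Psetk k) (pathk n 0) /\ TTpt (Psetk k) (pathk n 1).
Proof.
  intros Hn. pose proof K_ge2.
  destruct (valid_cases n Hn) as [->|[->|[[j [Hj ->]]|[j [Hj ->]]]]].
  - rewrite path0_lo by lra. rewrite path0_hi by lra. split.
    + rewrite Rminus_0_r. apply tangP'. lia. right; reflexivity.
    + replace (pk k 1 - 1 + 1) with (pk k 1) by ring. apply tangP'. lia. left; reflexivity.
  - rewrite pathL_lo by lra. rewrite pathL_hi by lra. split.
    + rewrite Rplus_0_r. apply tangP'. lia. left; reflexivity.
    + replace (pk k (K - 1) + 1 - 1) with (pk k (K - 1)) by ring. apply tangP'. lia. right; reflexivity.
  - rewrite !path_up by auto. split.
    + rewrite Rplus_0_r. apply tangP'. lia. left; reflexivity.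
    + rewrite <- pk_succ. apply tangP'. lia. left; reflexivity.
  - rewrite !path_dn by auto. split.
    + rewrite Rminus_0_r. apply tangP'. lia. right; reflexivity.
    + replace (pk k (j + 1) - 1) with (pk k j) by (rewrite pk_succ; ring). apply tangP'. lia. right; reflexivity.
Qed.

Lemma cell_uniq c c' x : pk k c <= x < pk k c + 1 -> pk k c' <= x < pk k c' + 1 -> c = c'.
Proof.
  intros H1 H2. rewrite <- pk_succ in H1, H2.
  assert (pk k c < pk k (c' + 1)) by lra. assert (pk k c' < pk k (c + 1)) by lra.
  apply pk_lt in H. apply pk_lt in H0. lia.
Qed.

Lemma Ik_cell n z : Ik k n z ->
  exists c, pk k c <= fst z < pk k c + 1 /\
   ((c = 0 /\ n = 0)%Z \/ ((c = K - 1 /\ n = 2 * K - 3)%Z /\ pk k c < fst z) \/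
    ((1 <= c <= K - 2)%Z /\ pk k c < fst z /\
      ((n = 2 * c - 1)%Z /\ snd z = Pk k (fst z) \/ (n = 2 * c)%Z /\ snd z = - Pk k (fst z)))).
Proof.
  pose proof K_ge2. pose proof a_pos. unfold Ik. fold K. rewrite r0_eq. fold a. unfold r1k. fold (r1k k). fold a.
  intros [[En [Hx Hy]]|[[En [Hx Hy]]|[[j [Hj [En [Hx Hy]]]]|[j [Hj [En [Hx Hy]]]]]]].
  - exists 0%Z. assert (E0 := pk_succ 0%Z). simpl in E0. rewrite pk_1 in Hx, E0.
    split. lra. left. auto.
  - exists (K - 1)%Z. rewrite pk_Km1 in *. split. lra. right; left. split. auto. lra.
  - exists j. rewrite pk_succ in Hx. split. lra. right; right. split; auto. split. lra. left. auto.
  - exists j. rewrite pk_succ in Hx. split. lra. right; right. split; auto. split. lra. right. auto.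
Qed.

Lemma fin_HC3 n z : Ik k n z -> ~ TTpt (Psetk k) z.
Proof.
  intros HI [x [[l [Hl ->]] ->]]. pose proof K_ge2.
  destruct (Ik_cell n _ HI) as [c [Hc Hcase]]. cbn [fst snd] in Hc, Hcase.
  assert (Hcl : c = l).
  { apply (cell_uniq c l (pk k l)); auto. lra. }
  subst c. destruct Hcase as [[E _]|[[[E _] Hlt]|[_ [Hlt _]]]]; try lia; lra.
Qed.

Lemma fin_HC4 n m z : Ik k n z -> Ik k m z -> n = m.
Proof.
  intros H1 H2. pose proof K_ge2.
  destruct (Ik_cell n _ H1) as [c [Hc C1]]. destruct (Ik_cell m _ H2) as [c' [Hc' C2]].
  assert (c = c') by (apply (cell_uniq c c' (fst z)); auto). subst c'.
  destruct C1 as [[E1 E2]|[[[E1 E2] _]|[Hj [Hlt [[E2 Y1]|[E2 Y1]]]]]];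
  destruct C2 as [[E1' E2']|[[[E1' E2'] _]|[Hj' [Hlt' [[E2' Y2]|[E2' Y2]]]]]]; try lia.
  - assert (0 < Pk k (fst z)).
    { apply P_pos.
      + assert (pk k 1 <= pk k c) by (apply pk_le; lia).
        assert (pk k (c + 1) <= pk k (K - 1)) by (apply pk_le; lia).
        rewrite pk_succ in *. rewrite pk_1, pk_Km1 in *. split; lra.
      + intros l Hl E. rewrite E in Hc, Hlt.
        pose proof (cell_uniq c l (pk k l) ltac:(lra) ltac:(lra)). subst. lra. }
    lra.
  - assert (0 < Pk k (fst z)).
    { apply P_pos.
      + assert (pk k 1 <= pk k c) by (apply pk_le; lia).
        assert (pk k (c + 1) <= pk k (K - 1)) by (apply pk_le; lia).
        rewrite pk_succ in *. rewrite pk_1, pk_Km1 in *. split; lra.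
      + intros l Hl E. rewrite E in Hc, Hlt.
        pose proof (cell_uniq c l (pk k l) ltac:(lra) ltac:(lra)). subst. lra. }
    lra.
Qed.

Lemma Lamk_iff z : Lamk k z <-> Lm (Pk k) z.
Proof.
  unfold Lamk, Lm. rewrite P_nonneg_iff. tauto.
Qed.

Lemma fin_HLT z : TTpt (Psetk k) z -> Lamk k z.
Proof.
  intros [x [[l [Hl ->]] ->]]. apply Lamk_iff. unfold Lm. simpl. rewrite P_tang by auto.
  split. lra. left. reflexivity.
Qed.


Lemma P_pos_cell c x : pk k c < x < pk k c + 1 -> - a < x < a -> 0 < Pk k x.
Proof.
  intros Hc Hx. apply P_pos; auto. intros l Hl E. rewrite E in Hc.
  pose proof (cell_uniq c l (pk k l) ltac:(lra) ltac:(lra)). subst. lra.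
Qed.

Lemma pk0 : pk k 0 = - a - /2.
Proof. assert (E0 := pk_succ 0%Z). simpl in E0. rewrite pk_1 in E0. lra. Qed.

Definition Dk := Derive (Pk k).

Lemma unpackk g : Omega (Xk k) (Yk k) (Lamk k) g ->
  gcont g /\ (exists tt, tt_ok tt /\ forall i, local_traj (Xf Dk) (Yf Dk) g (tt i) (tt (i + 1)%Z))
  /\ Lm (Pk k) (g 0).
Proof.
  intros Hg. destruct (Omega_unpack _ _ _ _ Hg) as [Hc [[tt [Htt H4]] HL]].
  split; auto. split. exists tt. split; auto. apply Lamk_iff; auto.
Qed.

Lemma fin_HA g : Omega (Xk k) (Yk k) (Lamk k) g -> forall t0, TTpt (Psetk k) (g t0) ->
  exists n, validk n /\ forall th, 0 <= th <= 1 -> g (t0 + th) = pathk n th.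
Proof.
  intros Hg t0 HT. destruct (unpackk g Hg) as [Hc [[tt [Htt H4]] HL]].
  pose proof K_ge2. pose proof a_pos. pose proof pk_1. pose proof pk_Km1. pose proof pk0.
  destruct HT as [x [[l [Hl ->]] Hgt]]. fold K in Hl.
  assert (Hl1 : pk k 1 <= pk k l) by (apply pk_le; lia).
  assert (Hl2 : pk k l <= pk k (K - 1)) by (apply pk_le; lia).
  assert (HPl : Pk k (pk k l) = 0) by (apply P_tang; auto).
  destruct (piece_at Dk g tt Htt H4 t0) as [i0 [Hi0 [HX|HY]]].
  - destruct (Z.eq_dec l (K - 1)) as [El|Nl].
    + exists (2 * K - 3)%Z. split. unfold validk; lia. subst l.
      assert (E1 : forall s, 0 <= s <= /2 -> g (t0 + s) = (pk k (K-1) + s, Pk k (pk k (K-1) + s))).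
      { apply (fwdR (Pk k) Dk (P_deriv) g tt Hc Htt H4 t0 i0 Hi0 HX (pk k (K-1)) (/2)).
        rewrite Hgt, HPl. reflexivity.
        intros s Hs. apply (P_pos_cell (K - 1)); lra. }
      set (t1 := t0 + /2).
      assert (G1 : g t1 = (a, 0)).
      { unfold t1. rewrite E1 by lra. rewrite pk_Km1. replace (a - /2 + /2) with a by lra.
        rewrite P_r1. reflexivity. }
      destruct (piece_at Dk g tt Htt H4 t1) as [i1 [Hi1 [HX1|HY1]]].
      * exfalso. apply (noX_at (Pk k) Dk P_deriv g _ _ t1 a Hc Hi1 HX1 G1 P_r1).
        intros x Hx. apply P_neg. lra.
      * assert (E2 : forall s, 0 <= s <= /2 -> g (t1 + s) = (a - s, - Pk k (a - s))).
        { apply (fwdL (Pk k) Dk (P_deriv) g tt Hc Htt H4 t1 i1 Hi1 HY1 a (/2)).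
          rewrite G1, P_r1, Ropp_0. reflexivity.
          intros s Hs. apply (P_pos_cell (K - 1)); lra. }
        intros th Hth. destruct (Rle_dec th (/2)).
        -- rewrite pathL_lo by auto. apply E1. lra.
        -- rewrite pathL_hi by lra. rewrite (geq g _ (t1 + (th - /2))) by (unfold t1; ring).
           rewrite E2 by lra. rewrite pk_Km1. replace (a - /2 + 1 - th) with (a - (th - /2)) by lra.
           reflexivity.
    + exists (2 * l - 1)%Z. split. unfold validk; lia.
      intros th Hth. rewrite path_up by lia.
      apply (fwdR (Pk k) Dk (P_deriv) g tt Hc Htt H4 t0 i0 Hi0 HX (pk k l) 1); auto.
      rewrite Hgt, HPl. reflexivity.
      intros s Hs. apply (P_pos_cell l). lra.
      assert (Hq : pk k (l + 1) <= pk k (K - 1)) by (apply pk_le; lia). rewrite pk_succ in Hq.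
      lra.
  - destruct (Z.eq_dec l 1) as [El|Nl].
    + exists 0%Z. split. unfold validk; lia. subst l.
      assert (E1 : forall s, 0 <= s <= /2 -> g (t0 + s) = (pk k 1 - s, - Pk k (pk k 1 - s))).
      { apply (fwdL (Pk k) Dk (P_deriv) g tt Hc Htt H4 t0 i0 Hi0 HY (pk k 1) (/2)).
        rewrite Hgt, HPl, Ropp_0. reflexivity.
        intros s Hs. apply (P_pos_cell 0); lra. }
      set (t1 := t0 + /2).
      assert (G1 : g t1 = (- a, 0)).
      { unfold t1. rewrite E1 by lra. rewrite pk_1. replace (- a + /2 - /2) with (- a) by lra.
        rewrite P_r0, Ropp_0. reflexivity. }
      destruct (piece_at Dk g tt Htt H4 t1) as [i1 [Hi1 [HX1|HY1]]].
      * assert (E2 : forall s, 0 <= s <= /2 -> g (t1 + s) = (- a + s, Pk k (- a + s))).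
        { apply (fwdR (Pk k) Dk (P_deriv) g tt Hc Htt H4 t1 i1 Hi1 HX1 (- a) (/2)).
          rewrite G1, P_r0. reflexivity.
          intros s Hs. apply (P_pos_cell 0); lra. }
        intros th Hth. destruct (Rle_dec th (/2)).
        -- rewrite path0_lo by auto. apply E1. lra.
        -- rewrite path0_hi by lra. rewrite (geq g _ (t1 + (th - /2))) by (unfold t1; ring).
           rewrite E2 by lra. rewrite pk_1. replace (- a + /2 - 1 + th) with (- a + (th - /2)) by lra.
           reflexivity.
      * exfalso. apply (noY_at (Pk k) Dk P_deriv g _ _ t1 (- a) Hc Hi1 HY1 G1 P_r0).
        intros x Hx. apply P_neg. lra.
    + exists (2 * (l - 1))%Z. split. unfold validk; lia.
      intros th Hth. rewrite path_dn by lia. replace (l - 1 + 1)%Z with l by lia.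
      apply (fwdL (Pk k) Dk (P_deriv) g tt Hc Htt H4 t0 i0 Hi0 HY (pk k l) 1); auto.
      rewrite Hgt, HPl, Ropp_0. reflexivity.
      intros s Hs. apply (P_pos_cell (l - 1)).
      assert (E := pk_succ (l - 1)). replace (l - 1 + 1)%Z with l in E by lia. lra.
      assert (pk k 2 <= pk k l) by (apply pk_le; lia).
      assert (E := pk_succ 1). simpl in E. lra.
Qed.


Lemma fin_HB g : Omega (Xk k) (Yk k) (Lamk k) g -> forall T0, exists t, T0 <= t <= T0 + 1 /\ TTpt (Psetk k) (g t).
Proof.
  intros Hg T0. destruct (unpackk g Hg) as [Hc [[tt [Htt H4]] HL]].
  pose proof K_ge2. pose proof a_pos. pose proof pk_1. pose proof pk_Km1. pose proof pk0.
  destruct (Lm_all (Pk k) Dk P_deriv g tt Hc Htt H4 HL T0) as [Hu Hv].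
  set (u := fst (g T0)) in *. set (v := snd (g T0)) in *.
  assert (Eg : g T0 = (u, v)) by apply surjective_pairing.
  assert (Hua : - a <= u <= a) by (rewrite <- r0_eq; apply P_nonneg_iff; auto).
  set (c := fl (u + INR k / 2)). destruct (fl_spec (u + INR k / 2)) as [Hc1 Hc2]. fold c in Hc1, Hc2. clearbody c.
  assert (Hcu : pk k c <= u < pk k c + 1) by (unfold pk; lra).
  assert (Hc0 : (0 <= c)%Z).
  { destruct (Z_le_gt_dec 0 c); auto. assert (Hq : pk k (c + 1) <= pk k 0) by (apply pk_le; lia).
    rewrite pk_succ in Hq. lra. }
  assert (HcK : (c <= K - 1)%Z).
  { destruct (Z_le_gt_dec c (K - 1)); auto. assert (pk k K <= pk k c) by (apply pk_le; lia).
    assert (E := pk_succ (K - 1)). replace (K - 1 + 1)%Z with K in E by lia. lra. }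
  destruct (Req_dec u (pk k c)) as [Euc|Nuc].
  { exists T0. split. lra. rewrite Eg, Euc. apply tangP'.
    split; auto. destruct (Z.eq_dec c 0); [|lia]. exfalso. rewrite Euc in Hua. rewrite e in Hua. lra.
    rewrite <- Euc. auto. }
  assert (Hcu' : pk k c < u) by lra.
  destruct (piece_at Dk g tt Htt H4 T0) as [i0 [Hi0 [HX|HY]]].
  - assert (Hva : 0 <= v) by (destruct HX as [HX _]; apply HX; lra).
    destruct (Req_dec u a) as [Eua|Nua].
    { exfalso. apply (noX_at (Pk k) Dk P_deriv g _ _ T0 a Hc Hi0 HX).
      rewrite Eg, Eua. f_equal. rewrite Eua, P_r1 in Hv. lra. apply P_r1.
      intros x Hx. apply P_neg. lra. }
    assert (Evu : v = Pk k u) by lra.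
    assert (Gu : g T0 = (u, Pk k u)) by (rewrite Eg, Evu; reflexivity).
    destruct (Z.eq_dec c (K - 1)) as [EcK|NcK].
    + subst c. set (t1 := T0 + (a - u)).
      assert (G1 : g t1 = (a, 0)).
      { unfold t1. rewrite (fwdR (Pk k) Dk P_deriv g tt Hc Htt H4 T0 i0 Hi0 HX u (a - u) Gu).
        replace (u + (a - u)) with a by ring. rewrite P_r1. reflexivity.
        intros s Hs. apply (P_pos_cell (K - 1)); lra. lra. }
      destruct (piece_at Dk g tt Htt H4 t1) as [i1 [Hi1 [HX1|HY1]]].
      * exfalso. apply (noX_at (Pk k) Dk P_deriv g _ _ t1 a Hc Hi1 HX1 G1 P_r1).
        intros x Hx. apply P_neg. lra.
      * exists (t1 + /2). split. unfold t1. lra.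
        rewrite (fwdL (Pk k) Dk (P_deriv) g tt Hc Htt H4 t1 i1 Hi1 HY1 a (/2)).
        replace (a - /2) with (pk k (K - 1)) by lra. apply tangP'. lia. right; reflexivity.
        rewrite G1, P_r1, Ropp_0. reflexivity.
        intros s Hs. apply (P_pos_cell (K - 1)); lra. lra.
    + exists (T0 + (pk k (c + 1) - u)). rewrite pk_succ. split. lra.
      rewrite (fwdR (Pk k) Dk P_deriv g tt Hc Htt H4 T0 i0 Hi0 HX u (pk k c + 1 - u) Gu).
      replace (u + (pk k c + 1 - u)) with (pk k (c + 1)) by (rewrite pk_succ; ring).
      apply tangP'. lia. left; reflexivity.
      intros s Hs. apply (P_pos_cell c). lra.
      assert (Hq : pk k (c + 1) <= pk k (K - 1)) by (apply pk_le; lia). rewrite pk_succ in Hq. lra.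
      lra.
  - assert (Hva : v <= 0) by (destruct HY as [HY _]; apply HY; lra).
    destruct (Req_dec u (- a)) as [Eua|Nua].
    { exfalso. apply (noY_at (Pk k) Dk P_deriv g _ _ T0 (- a) Hc Hi0 HY).
      rewrite Eg, Eua. f_equal. rewrite Eua, P_r0 in Hv. lra. apply P_r0.
      intros x Hx. apply P_neg. lra. }
    assert (Evu : v = - Pk k u) by lra.
    assert (Gu : g T0 = (u, - Pk k u)) by (rewrite Eg, Evu; reflexivity).
    destruct (Z.eq_dec c 0) as [Ec0|Nc0].
    + subst c. set (t1 := T0 + (u + a)).
      assert (G1 : g t1 = (- a, 0)).
      { unfold t1. rewrite (fwdL (Pk k) Dk P_deriv g tt Hc Htt H4 T0 i0 Hi0 HY u (u + a) Gu).
        replace (u - (u + a)) with (- a) by ring. rewrite P_r0, Ropp_0. reflexivity.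
        intros s Hs. apply (P_pos_cell 0); lra. lra. }
      destruct (piece_at Dk g tt Htt H4 t1) as [i1 [Hi1 [HX1|HY1]]].
      * exists (t1 + /2). split. unfold t1. lra.
        rewrite (fwdR (Pk k) Dk (P_deriv) g tt Hc Htt H4 t1 i1 Hi1 HX1 (- a) (/2)).
        replace (- a + /2) with (pk k 1) by lra. apply tangP'. lia. left; reflexivity.
        rewrite G1, P_r0. reflexivity.
        intros s Hs. apply (P_pos_cell 0); lra. lra.
      * exfalso. apply (noY_at (Pk k) Dk P_deriv g _ _ t1 (- a) Hc Hi1 HY1 G1 P_r0).
        intros x Hx. apply P_neg. lra.
    + exists (T0 + (u - pk k c)). split. lra.
      rewrite (fwdL (Pk k) Dk P_deriv g tt Hc Htt H4 T0 i0 Hi0 HY u (u - pk k c) Gu).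
      replace (u - (u - pk k c)) with (pk k c) by ring.
      apply tangP'. lia. right; reflexivity.
      intros s Hs. apply (P_pos_cell c). lra.
      assert (Hq : pk k 1 <= pk k c) by (apply pk_le; lia). lra.
      lra.
Qed.



Lemma cset_fin n : validk n -> exists c lx rx,
  (0 <= c <= K - 1)%Z /\ pk k c <= lx <= pk k c + /2 /\ pk k c + /2 <= rx <= pk k c + 1 /\
  Cset pathk n (lx, 0) /\ Cset pathk n (rx, 0) /\
  (forall z, Cset pathk n z -> lx <= fst z <= rx /\ - a <= fst z <= a /\
      (snd z = Pk k (fst z) \/ snd z = - Pk k (fst z))) /\
  ((c = 0 /\ n = 0)%Z \/ (c = K - 1 /\ n = 2 * K - 3)%Z \/
   ((1 <= c <= K - 2)%Z /\
    (((n = 2 * c - 1)%Z /\ Cset pathk n (pk k c + /2, Pk k (pk k c + /2)) /\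
       forall z, Cset pathk n z -> snd z = Pk k (fst z)) \/
     ((n = 2 * c)%Z /\ Cset pathk n (pk k c + /2, - Pk k (pk k c + /2)) /\
       forall z, Cset pathk n z -> snd z = - Pk k (fst z))))).
Proof.
  intros Hn. pose proof K_ge2. pose proof a_pos. pose proof pk_1. pose proof pk_Km1. pose proof pk0.
  destruct (valid_cases n Hn) as [->|[->|[[j [Hj ->]]|[j [Hj ->]]]]].
  - exists 0%Z, (- a), (pk k 1). split. lia. split. lra. split. lra. split; [|split; [|split]].
    + exists (/2). split. lra. rewrite path0_lo by lra. f_equal. lra.
      replace (pk k 1 - /2) with (- a) by lra. rewrite P_r0. ring.
    + exists 0. split. lra. rewrite path0_lo by lra. rewrite Rminus_0_r. f_equal.
      rewrite P_tang by lia. ring.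
    + intros z [th [Hth ->]]. destruct (Rle_dec th (/2)).
      * rewrite path0_lo by auto. simpl. split. lra. split. lra. right; reflexivity.
      * rewrite path0_hi by lra. simpl. split. lra. split. lra. left; reflexivity.
    + left. auto.
  - exists (K - 1)%Z, (pk k (K - 1)), a. split. lia. split. lra. split. lra. split; [|split; [|split]].
    + exists 0. split. lra. rewrite pathL_lo by lra. rewrite Rplus_0_r. f_equal.
      rewrite P_tang by lia. ring.
    + exists (/2). split. lra. rewrite pathL_lo by lra. f_equal. lra.
      replace (pk k (K - 1) + /2) with a by lra. rewrite P_r1. ring.
    + intros z [th [Hth ->]]. destruct (Rle_dec th (/2)).
      * rewrite pathL_lo by auto. simpl. split. lra. split. lra. left; reflexivity.
      * rewrite pathL_hi by lra. simpl. split. lra. split. lra. right; reflexivity.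
    + right; left. auto.
  - assert (Hq1 : pk k 1 <= pk k j) by (apply pk_le; lia).
    assert (Hq2 : pk k (j + 1) <= pk k (K - 1)) by (apply pk_le; lia). rewrite pk_succ in Hq2.
    exists j, (pk k j), (pk k j + 1). split. lia. split. lra. split. lra. split; [|split; [|split]].
    + exists 0. split. lra. rewrite path_up by lia. rewrite Rplus_0_r. f_equal.
      rewrite P_tang by lia. ring.
    + exists 1. split. lra. rewrite path_up by lia. f_equal.
      rewrite <- pk_succ, P_tang by lia. ring.
    + intros z [th [Hth ->]]. rewrite path_up by lia. simpl. split. lra. split. lra. left; reflexivity.
    + right; right. split. lia. left. split; auto. split.
      * exists (/2). split. lra. rewrite path_up by lia. reflexivity.
      * intros z [th [Hth ->]]. rewrite path_up by lia. reflexivity.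
  - assert (Hq1 : pk k 1 <= pk k j) by (apply pk_le; lia).
    assert (Hq2 : pk k (j + 1) <= pk k (K - 1)) by (apply pk_le; lia). rewrite pk_succ in Hq2.
    exists j, (pk k j), (pk k j + 1). split. lia. split. lra. split. lra. split; [|split; [|split]].
    + exists 1. split. lra. rewrite path_dn by lia. rewrite pk_succ. f_equal. ring.
      replace (pk k j + 1 - 1) with (pk k j) by ring. rewrite P_tang by lia. ring.
    + exists 0. split. lra. rewrite path_dn by lia. rewrite Rminus_0_r, pk_succ. f_equal.
      rewrite <- pk_succ, P_tang by lia. ring.
    + intros z [th [Hth ->]]. rewrite path_dn by lia. simpl. rewrite pk_succ. split. lra. split. lra. right; reflexivity.
    + right; right. split. lia. right. split; auto. split.
      * exists (/2). split. lra. rewrite path_dn by lia. rewrite pk_succ.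
        replace (pk k j + 1 - /2) with (pk k j + /2) by lra. reflexivity.
      * intros z [th [Hth ->]]. rewrite path_dn by lia. reflexivity.
Qed.

Definition c0k := (/4) ^ (k - 1).

Lemma c0k_bounds : 0 < c0k <= /4.
Proof.
  unfold c0k. split. apply pow_lt. lra.
  replace (k - 1)%nat with (S (k - 2)) by lia. simpl.
  assert ((/4) ^ (k - 2) <= 1) by (destruct (Nat.eq_dec (k - 2) 0) as [E|E]; [rewrite E; simpl; lra|left; apply pow_lt_1_compat; [lra|lia]]).
  assert (0 <= (/4) ^ (k - 2)) by (apply pow_le; lra). nra.
Qed.

Lemma Bdk_nonneg : 0 <= Bdk.
Proof. unfold Bdk. apply Rmult_le_pos. apply pow2_ge_0. apply pow_le. apply pow2_ge_0. Qed.

Lemma fin_bounds n m : validk n -> validk m ->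
  c0k / IZR (2 * K - 3) * IZR (Z.abs (n - m)) <= hdist (Cset pathk n) (Cset pathk m) <=
  (2 * a + 2 * Bdk + 1) * IZR (Z.abs (n - m)).
Proof.
  intros Hn Hm. pose proof K_ge2. pose proof a_pos. pose proof Bdk_nonneg. pose proof c0k_bounds.
  assert (HK3 : 1 <= IZR (2 * K - 3)) by (apply IZR_le; lia).
  destruct (Z.eq_dec n m) as [<-|Hne].
  { rewrite hdist_refl, Z.sub_diag. simpl. lra. }
  assert (HK : 1 <= IZR (Z.abs (n - m))) by (apply IZR_le; lia).
  assert (HK' : IZR (Z.abs (n - m)) <= IZR (2 * K - 3)) by (apply IZR_le; unfold validk in *; lia).
  destruct (cset_fin n Hn) as [c [lx [rx [Hc [Hl [Hr [Lp [Rp [Fz Cn]]]]]]]]].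
  destruct (cset_fin m Hm) as [c' [lx' [rx' [Hc' [Hl' [Hr' [Lp' [Rp' [Fz' Cm]]]]]]]]].
  assert (HM : forall p q, Cset pathk n p -> Cset pathk m q -> edist p q <= 2 * a + 2 * Bdk).
  { intros p q Hp Hq. destruct (Fz p Hp) as [_ [Hp1 Hp2]]. destruct (Fz' q Hq) as [_ [Hq1 Hq2]].
    eapply Rle_trans. apply edist_le.
    pose proof (P_le (fst p) Hp1). pose proof (P_le (fst q) Hq1).
    pose proof (P_nonneg (fst p) Hp1). pose proof (P_nonneg (fst q) Hq1).
    assert (Rabs (fst p - fst q) <= 2 * a) by (apply Rabs_le; lra).
    assert (Rabs (snd p - snd q) <= 2 * Bdk) by (apply Rabs_le; destruct Hp2, Hq2; lra).
    lra. }
  split.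
  - assert (Low : c0k <= hdist (Cset pathk n) (Cset pathk m)).
    { destruct (Z.lt_total c c') as [Hlt|[Heq|Hgt]].
      + apply (hdist_ge _ _ (lx, 0) (lx', 0) _ (2 * a + 2 * Bdk)); auto.
        intros b Hb. destruct (Fz' b Hb) as [[Hb1 _] _].
        assert (pk k (c + 1) <= pk k c') by (apply pk_le; lia). rewrite pk_succ in H3.
        eapply Rle_trans. 2: apply edist_fst. simpl. rewrite Rabs_left1; lra.
      + subst c'.
        destruct Cn as [[E1 E2]|[[E1 E2]|[Hj [[E2 [Mid Sg]]|[E2 [Mid Sg]]]]]];
        destruct Cm as [[E1' E2']|[[E1' E2']|[Hj' [[E2' [Mid' Sg']]|[E2' [Mid' Sg']]]]]]; try lia.
        * apply (hdist_ge _ _ _ (lx', 0) _ (2 * a + 2 * Bdk) Mid); auto.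
          intros b Hb. destruct (Fz' b Hb) as [_ [Hb1 _]].
          pose proof (P_nonneg _ Hb1). pose proof (P_mid c Hj). unfold c0k in *.
          eapply Rle_trans. 2: apply edist_snd. simpl. rewrite (Sg' b Hb). set (q := Pk k (fst b)) in *. rewrite Rabs_pos_eq; lra.
        * apply (hdist_ge _ _ _ (lx', 0) _ (2 * a + 2 * Bdk) Mid); auto.
          intros b Hb. destruct (Fz' b Hb) as [_ [Hb1 _]].
          pose proof (P_nonneg _ Hb1). pose proof (P_mid c Hj). unfold c0k in *.
          eapply Rle_trans. 2: apply edist_snd. simpl. rewrite (Sg' b Hb). set (q := Pk k (fst b)) in *. rewrite Rabs_left1; lra.
      + apply (hdist_ge _ _ (rx, 0) (lx', 0) _ (2 * a + 2 * Bdk)); auto.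
        intros b Hb. destruct (Fz' b Hb) as [[_ Hb1] _].
        assert (pk k (c' + 1) <= pk k c) by (apply pk_le; lia). rewrite pk_succ in H3.
        eapply Rle_trans. 2: apply edist_fst. simpl. rewrite Rabs_pos_eq; lra. }
    set (N := IZR (Z.abs (n - m))) in *. set (Dd := IZR (2 * K - 3)) in *.
    assert (Hq : N / Dd <= 1).
    { apply (Rmult_le_reg_r Dd). lra. replace (N / Dd * Dd) with N by (field; lra). lra. }
    replace (c0k / Dd * N) with (c0k * (N / Dd)) by (field; lra).
    apply Rle_trans with (c0k * 1). apply Rmult_le_compat_l; lra. lra.
  - eapply Rle_trans. apply (hdist_le _ _ (2 * a + 2 * Bdk)). lra.
    intros p Hp. exists (lx', 0). split; auto.
    intros q Hq. exists (lx, 0). split; auto. rewrite edist_sym. apply HM; auto.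
    nra.
Qed.


Definition fin_itin_valid := itin_valid (Xk k) (Yk k) (Lamk k) (Ik k) (Psetk k) validk pathk
  fin_HA fin_HB fin_HC1 fin_HC2 fin_HC3 fin_HC4.

Theorem fin_homeo : itinerary_homeo (Xk k) (Yk k) (Lamk k) (Ik k) (Psetk k) (targetk k).
Proof.
  pose proof K_ge2. pose proof a_pos. pose proof Bdk_nonneg. pose proof c0k_bounds.
  assert (HK3 : 1 <= IZR (2 * K - 3)) by (apply IZR_le; lia).
  apply (homeo_generic (Xk k) (Yk k) (Lamk k) (Ik k) (Psetk k) validk pathk
    fin_HA fin_HB fin_HC1 fin_HC2 fin_HC3 fin_HC4 fin_HLT (targetk k)
    (c0k / IZR (2 * K - 3)) (2 * a + 2 * Bdk + 1)).
  - apply Rdiv_lt_0_compat; lra.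
  - lra.
  - intros n m Hn Hm. apply fin_bounds; auto.
  - intros g1 g2 G1 G2. apply (ex_dseq_lin _ (IZR (2 * K - 3)) 0). lra. lra.
    intros j. pose proof (fin_itin_valid g1 G1 j). pose proof (fin_itin_valid g2 G2 j).
    unfold validk in *. split. apply IZR_le. lia. rewrite Rmult_0_l, Rplus_0_r. apply IZR_le. lia.
  - intros g Hg j. pose proof (fin_itin_valid g Hg j) as V. unfold validk in V. unfold targetk. fold K. lia.
Qed.

End Fin.

Theorem mainTheorem14 :
  (forall k : nat, (2 <= k)%nat ->
     itinerary_homeo (Xk k) (Yk k) (Lamk k) (Ik k) (Psetk k) (targetk k))
  /\ itinerary_homeo Xinf Yinf Laminf Iinf Psetinf Thetainf.
Proof.
  split. intros k Hk. apply fin_homeo; auto. apply inf_homeo.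
Qed.
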